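(* Under the Setting below, let $\{x^k\}_{k\ge0}$ be generated by Algorithm 1 with extrapolation weights satisfying $0\le\omega_k\le\omega<1$. Then: (1) $\{x^k\}$ is bounded; (2) every cluster point of $\{x^k\}$ is a local minimizer of $H$; (3) $H(x^k)\to H(x^* )$, where $x^*$ is any cluster point of $\{x^k\}$; (4) if moreover $\omega_k\equiv\omega\in(0,1)$ for all $k$, then the whole sequence $\{x^k\}$ converges (to a local minimizer of $H$).
   Context: Setting. Let $\lambda>0$, $l,u\in\mathbb{R}^n$ with $l\le u$ componentwise, $X=\{x\in\mathbb{R}^n: l\le x\le u\}$, and $\delta_X$ the indicator function of $X$ ($0$ on $X$, $+\infty$ outside). For $x\in\mathbb{R}^n$, $\|x\|_0$ is the number of nonzero components of $x$ and $I(x)=\{i: x_i=0\}$. Let $f:\mathbb{R}^n\to\mathbb{R}$ be convex and differentiable, bounded from below on $X$, with $\nabla f$ $L$-Lipschitz continuous on $X$ ($L>0$). Define $H(x)=\lambda\|x\|_0+f(x)+\delta_X(x)$. Algorithm 1. Choose $\mu>0$, extrapolation weights $0\le\omega_k\le\omega<1$, and a starting point $x^0\in X$; set $x^{-1}=x^0$. For $k=0,1,2,\dots$: define $y^{k+1}\in\mathbb{R}^n$ by $y^{k+1}_i=x^k_i+\omega_k(x^k_i-x^{k-1}_i)$ for $i\notin I(x^k)$ and $y^{k+1}_i=x^k_i\,(=0)$ for $i\in I(x^k)$ (extrapolation only on the support of $x^k$); if $\langle y^{k+1}-x^k,\nabla f(y^{k+1})\rangle>0$ or $y^{k+1}\notin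 X$, reset $y^{k+1}:=x^k$; then take any $$x^{k+1}\in\arg\min_{x\in X}\ \lambda\|x\|_0+\frac{L}{2}\Big\|x-y^{k+1}+\frac1L\nabla f(y^{k+1})\Big\|^2+\frac{\mu}{2}\|x-y^{k+1}\|^2 .$$ A local minimizer of $H$ is a point $x^*\in X$ such that $H(x)\ge H(x^* )$ for all $x$ in some neighborhood of $x^*$. *)

(* Defs.v *)
From mathcomp Require Import ssreflect ssrfun ssrbool eqtype ssrnat seq fintype.
From Stdlib Require Import Reals Lra.
Open Scope R_scope.

Definition vec (n : nat) := 'I_n -> R.

Definition sumI {n : nat} (F : 'I_n -> R) : R :=
  List.fold_right Rplus 0 (List.map F (enum 'I_n)).

Definition vadd {n} (x y : vec n) : vec n := fun i => x i + y i.
Definition vsub {n} (x y : vec n) : vec n := fun i => x i - y i.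
Definition vscal {n} (a : R) (x : vec n) : vec n := fun i => a * x i.
Definition inner {n} (x y : vec n) : R := sumI (fun i => x i * y i).
Definition sqnorm {n} (x : vec n) : R := inner x x.
Definition norm {n} (x : vec n) : R := sqrt (sqnorm x).

Definition l0 {n} (x : vec n) : R :=
  sumI (fun i => if Req_EM_T (x i) 0 then 0 else 1).

Definition inX {n} (l u x : vec n) : Prop := forall i, l i <= x i <= u i.

Definition convex {n} (f : vec n -> R) : Prop :=
  forall x y t, 0 <= t <= 1 ->
    f (vadd (vscal t x) (vscal (1 - t) y)) <= t * f x + (1 - t) * f y.

Definition is_gradient {n} (f : vec n -> R) (g : vec n -> vec n) : Prop :=
  forall x eps, 0 < eps -> exists delta, 0 < delta /\
    forall y, norm (vsub y x) < delta ->
      Rabs (f y - f x - inner (g x) (vsub y x)) <= eps * norm (vsub y x).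

(** H restricted to X (where H = lambda ||x||_0 + f(x) + delta_X(x) is finite) *)
Definition Hfin {n} (lam : R) (f : vec n -> R) (x : vec n) : R := lam * l0 x + f x.

(** local minimizer of H = lambda||.||_0 + f + delta_X : since H = +oo off X,
    the defining inequality only needs checking on X. *)
Definition local_min {n} (lam : R) (f : vec n -> R) (l u xs : vec n) : Prop :=
  inX l u xs /\ exists delta, 0 < delta /\
    forall x, inX l u x -> norm (vsub x xs) < delta ->
      Hfin lam f xs <= Hfin lam f x.

Definition bounded_seq {n} (x : nat -> vec n) : Prop :=
  exists M, forall k, norm (x k) <= M.

Definition cluster_point {n} (x : nat -> vec n) (xs : vec n) : Prop :=
  forall eps, 0 < eps -> forall N : nat, exists k : nat, (N <= k)%nat /\ norm (vsub (x k) xs) < eps.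

Definition converges_to {n} (x : nat -> vec n) (xs : vec n) : Prop :=
  forall eps, 0 < eps -> exists N : nat, forall k : nat, (N <= k)%nat -> norm (vsub (x k) xs) < eps.

(** x^{k-1} with the convention x^{-1} = x^0 *)
Definition xprev {n} (x : nat -> vec n) (k : nat) : vec n :=
  match k with O => x O | S k' => x k' end.

Definition yhat {n} (x : nat -> vec n) (om : nat -> R) (k : nat) : vec n :=
  fun i => if Req_EM_T (x k i) 0 then x k i
           else x k i + om k * (x k i - xprev x k i).

Definition subobj {n} (lam L mu : R) (g : vec n -> vec n) (y z : vec n) : R :=
  lam * l0 z + L / 2 * sqnorm (vadd (vsub z y) (vscal (1 / L) (g y)))
  + mu / 2 * sqnorm (vsub z y).

(** (x, y) is a run of Algorithm 1; y k denotes y^k (y 0 unused). *)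
Definition algorithm1 {n} (lam L mu : R) (l u : vec n) (g : vec n -> vec n)
    (om : nat -> R) (x y : nat -> vec n) : Prop :=
  inX l u (x O) /\
  forall k : nat,
    (let yh := yhat x om k in
     ((inner (vsub yh (x k)) (g yh) > 0 \/ ~ inX l u yh) -> y (S k) = x k) /\
     (~ (inner (vsub yh (x k)) (g yh) > 0 \/ ~ inX l u yh) -> y (S k) = yh)) /\
    inX l u (x (S k)) /\
    (forall z, inX l u z -> subobj lam L mu g (y (S k)) (x (S k)) <= subobj lam L mu g (y (S k)) z).

(* Main.v *)
Require Import Defs.
From mathcomp Require Import ssreflect ssrfun ssrbool eqtype ssrnat seq fintype.
From Stdlib Require Import Reals Lra.
From Stdlib Require Import FunctionalExtensionality.
Open Scope R_scope.

Definition sumL {T : Type} (s : list T) (F : T -> R) : R :=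
  List.fold_right Rplus 0 (List.map F s).

Lemma sumI_L n (F : 'I_n -> R) : sumI F = sumL (enum 'I_n) F.
Proof. reflexivity. Qed.

Lemma sumL_nil {T} (F : T -> R) : sumL nil F = 0. Proof. reflexivity. Qed.
Lemma sumL_cons {T} a s (F : T -> R) : sumL (a :: s) F = F a + sumL s F. Proof. reflexivity. Qed.

Lemma sumL_ext {T} (s : list T) F G : (forall i, F i = G i) -> sumL s F = sumL s G.
Proof. move=> H; elim: s => [|a s IH] //; rewrite !sumL_cons IH H //. Qed.

Lemma sumL_add {T} (s : list T) F G :
  sumL s (fun i => F i + G i) = sumL s F + sumL s G.
Proof. elim: s => [|a s IH]; rewrite ?sumL_nil ?sumL_cons; [lra|rewrite ?IH; lra]. Qed.

Lemma sumL_scal {T} (s : list T) c F :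
  sumL s (fun i => c * F i) = c * sumL s F.
Proof. elim: s => [|a s IH]; rewrite ?sumL_nil ?sumL_cons; [lra|rewrite ?IH; lra]. Qed.

Lemma sumL_le {T} (s : list T) F G : (forall i, F i <= G i) -> sumL s F <= sumL s G.
Proof. move=> H; elim: s => [|a s IH]; rewrite ?sumL_nil ?sumL_cons; [lra|have := H a; lra]. Qed.

Lemma sumL_const {T} (s : list T) c : sumL s (fun _ => c) = INR (size s) * c.
Proof.
elim: s => [|a s IH]; rewrite ?sumL_nil ?sumL_cons; first by rewrite /=; lra.
rewrite IH; change (size (a :: s)) with (S (size s)); rewrite S_INR; lra.
Qed.

Lemma sumL_term {T : eqType} (s : list T) F i : (forall j, 0 <= F j) -> i \in s ->
  F i <= sumL s F.
Proof.
move=> H; elim: s => [|a s IH] //=; rewrite in_cons /sumL /= => /orP [/eqP -> | Hi].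
- have : 0 <= List.fold_right Rplus 0 (List.map F s).
    have := sumL_le s (fun _ => 0) F H. rewrite /sumL. 
    have -> : List.fold_right Rplus 0 (List.map (fun _ : T => 0) s) = 0.
      by elim: s {IH} => //= b s ->; lra.
    done.
  lra.
- have := IH Hi; have := H a; rewrite /sumL; lra.
Qed.

Lemma sumL_single {T : eqType} (s : list T) F i : (forall j, j != i -> F j = 0) -> uniq s ->
  sumL s F = if i \in s then F i else 0.
Proof.
move=> H; elim: s => [|a s IH] //= /andP [Ha Hu]; rewrite sumL_cons.
rewrite IH // in_cons.
case: (eqVneq a i) => [<-|Hai] /=.
- by rewrite (negbTE Ha); lra.
- rewrite H //; lra.
Qed.

Lemma sumL_plus1 {T : eqType} (s : list T) F G i : (forall j, F j <= G j) -> i \in s ->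
  F i + 1 <= G i -> sumL s F + 1 <= sumL s G.
Proof.
move=> H; elim: s => [|a s IH] //=; rewrite in_cons /sumL /= => /orP [/eqP -> | Hi] Hl.
- have := sumL_le s F G H; rewrite /sumL; lra.
- have := IH Hi Hl; have := H a; rewrite /sumL; lra.
Qed.

Lemma sumL_cv {T} (s : list T) (F : nat -> T -> R) G :
  (forall i, Un_cv (fun k => F k i) (G i)) -> Un_cv (fun k => sumL s (F k)) (sumL s G).
Proof.
move=> H; elim: s => [|a s IH].
- move=> e He; exists O => k _; rewrite /R_dist !sumL_nil Rminus_diag Rabs_R0; lra.
- rewrite sumL_cons. exact: CV_plus.
Qed.

Lemma sumI_ext {n} (F G : 'I_n -> R) : (forall i, F i = G i) -> sumI F = sumI G.
Proof. exact: sumL_ext. Qed.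
Lemma sumI_add {n} (F G : 'I_n -> R) : sumI (fun i => F i + G i) = sumI F + sumI G.
Proof. exact: sumL_add. Qed.
Lemma sumI_scal {n} c (F : 'I_n -> R) : sumI (fun i => c * F i) = c * sumI F.
Proof. exact: sumL_scal. Qed.
Lemma sumI_le {n} (F G : 'I_n -> R) : (forall i, F i <= G i) -> sumI F <= sumI G.
Proof. exact: sumL_le. Qed.
Lemma sumI_const {n} c : sumI (fun _ : 'I_n => c) = INR n * c.
Proof. by rewrite sumI_L sumL_const size_enum_ord. Qed.
Lemma sumI_term {n} (F : 'I_n -> R) i : (forall j, 0 <= F j) -> F i <= sumI F.
Proof. move=> H; apply: sumL_term => //; by rewrite mem_enum. Qed.
Lemma sumI_single {n} (F : 'I_n -> R) i : (forall j, j != i -> F j = 0) -> sumI F = F i.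
Proof. move=> H; rewrite sumI_L (sumL_single _ _ i) ?enum_uniq // mem_enum //. Qed.
Lemma sumI_plus1 {n} (F G : 'I_n -> R) i : (forall j, F j <= G j) -> F i + 1 <= G i ->
  sumI F + 1 <= sumI G.
Proof. move=> H; apply: sumL_plus1 => //; by rewrite mem_enum. Qed.
Lemma sumI_cv {n} (F : nat -> 'I_n -> R) G :
  (forall i, Un_cv (fun k => F k i) (G i)) -> Un_cv (fun k => sumI (F k)) (sumI G).
Proof. exact: sumL_cv. Qed.
Lemma sumI_nonneg {n} (F : 'I_n -> R) : (forall i, 0 <= F i) -> 0 <= sumI F.
Proof. move=> H; have := sumI_le (fun _ => 0) F H; rewrite sumI_const; lra. Qed.
Lemma sumI_opp {n} (F : 'I_n -> R) : sumI (fun i => - F i) = - sumI F.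
Proof. rewrite -(sumI_ext (fun i => -1 * F i)); [rewrite sumI_scal; lra | move=> i; lra]. Qed.
Lemma sumI_sub {n} (F G : 'I_n -> R) : sumI (fun i => F i - G i) = sumI F - sumI G.
Proof.
rewrite (sumI_ext _ (fun i => F i + - G i)); last by move=> i; lra.
rewrite sumI_add sumI_opp; lra.
Qed.

Lemma finite_pos_lb n (F : 'I_n -> R) : (forall i, 0 < F i) ->
  exists m, 0 < m /\ forall i, m <= F i.
Proof.
move=> H.
suff: forall s : seq 'I_n, exists m, 0 < m /\ forall i, i \in s -> m <= F i.
  case/(_ (enum 'I_n)) => m [Hm Hs]; exists m; split => // i; apply: Hs; by rewrite mem_enum.
elim=> [|a s [m [Hm Hs]]]; first by exists 1; split => //; lra.
exists (Rmin m (F a)); split; first by apply: Rmin_pos => //.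
move=> i; rewrite in_cons => /orP [/eqP ->|Hi]; first exact: Rmin_r.
apply: Rle_trans (Rmin_l _ _) (Hs _ Hi).
Qed.

Lemma finite_eventually n (P : 'I_n -> nat -> Prop) :
  (forall i, exists K, forall k, (K <= k)%nat -> P i k) ->
  exists K, forall k, (K <= k)%nat -> forall i, P i k.
Proof.
move=> H.
suff: forall s : seq 'I_n, exists K, forall k, (K <= k)%nat -> forall i, i \in s -> P i k.
  case/(_ (enum 'I_n)) => K HK; exists K => k Hk i; apply: HK => //; by rewrite mem_enum.
elim=> [|a s [K HK]]; first by exists O.
case: (H a) => Ka HKa; exists (maxn K Ka) => k Hk i; rewrite in_cons => /orP [/eqP ->|Hi].
- apply: HKa; exact: leq_trans (leq_maxr _ _) Hk.
- apply: HK => //; exact: leq_trans (leq_maxl _ _) Hk.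
Qed.
Lemma abs_le_inv a b : Rabs a <= b -> - b <= a <= b.
Proof. move=> H; split; [have := Rle_abs (- a); rewrite Rabs_Ropp | have := Rle_abs a]; lra. Qed.

Lemma div_lt_l a b c : 0 < b -> a < c * b -> a / b < c.
Proof.
move=> Hb H. have -> : c = (c * b) / b by field; lra.
apply: Rmult_lt_compat_r => //; exact: Rinv_0_lt_compat.
Qed.

Lemma disc_lemma A B C : 0 <= C -> (forall t, 0 <= A - 2 * t * B + t * t * C) -> B * B <= A * C.
Proof.
move=> HC H.
case: (Rle_lt_or_eq_dec 0 C HC) => [Cp|C0].
- have := H (B / C). 
  have -> : A - 2 * (B / C) * B + B / C * (B / C) * C = A - B * B / C by field; lra.
  move=> h. have : B * B / C <= A by lra.
  move=> h2. have := Rmult_le_compat_r C _ _ HC h2.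
  have -> : B * B / C * C = B * B by field; lra. done.
- subst C. rewrite Rmult_0_r.
  case: (Req_dec B 0) => [->|Bn]; first lra.
  have := H ((A + 1) / (2 * B)).
  have -> : A - 2 * ((A + 1) / (2 * B)) * B + (A + 1) / (2 * B) * ((A + 1) / (2 * B)) * 0 = -1
    by field.
  lra.
Qed.

Lemma inner_sum {n} (a b : vec n) : inner a b = sumI (fun i => a i * b i). Proof. reflexivity. Qed.
Lemma sqnorm_sum {n} (a : vec n) : sqnorm a = sumI (fun i => a i * a i). Proof. reflexivity. Qed.

Lemma sqnorm_nonneg {n} (a : vec n) : 0 <= sqnorm a.
Proof. apply: sumI_nonneg => i; nra. Qed.

Lemma norm_nonneg {n} (a : vec n) : 0 <= norm a.
Proof. exact: sqrt_pos. Qed.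

Lemma norm_sq {n} (a : vec n) : norm a * norm a = sqnorm a.
Proof. rewrite /norm sqrt_sqrt //; exact: sqnorm_nonneg. Qed.

Lemma inner_comm {n} (a b : vec n) : inner a b = inner b a.
Proof. apply: sumI_ext => i; lra. Qed.

Lemma CS {n} (a b : vec n) : Rabs (inner a b) <= norm a * norm b.
Proof.
have H : inner a b * inner a b <= sqnorm a * sqnorm b.
  apply: disc_lemma; first exact: sqnorm_nonneg.
  move=> t. have := sqnorm_nonneg (fun i => a i - t * b i).
  rewrite !sqnorm_sum inner_sum.
  have -> : sumI (fun i => (a i - t * b i) * (a i - t * b i)) =
     sumI (fun i => a i * a i) - 2 * t * sumI (fun i => a i * b i) + t * t * sumI (fun i => b i * b i).
    rewrite -!sumI_scal -sumI_sub -sumI_add; apply: sumI_ext => i; ring.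
  done.
rewrite -(sqrt_Rsqr_abs (inner a b)) /norm -sqrt_mult; try exact: sqnorm_nonneg.
apply: sqrt_le_1_alt. rewrite /Rsqr; lra.
Qed.

Lemma comp_le_norm {n} (a : vec n) i : Rabs (a i) <= norm a.
Proof.
rewrite -sqrt_Rsqr_abs /norm; apply: sqrt_le_1_alt.
rewrite sqnorm_sum /Rsqr. apply: (sumI_term (fun i => a i * a i)) => j; nra.
Qed.

Lemma norm_scal {n} c (a : vec n) : norm (vscal c a) = Rabs c * norm a.
Proof.
rewrite /norm.
have -> : sqnorm (vscal c a) = (c * c) * sqnorm a.
  rewrite !sqnorm_sum -sumI_scal; apply: sumI_ext => i; rewrite /vscal; ring.
rewrite sqrt_mult; [| nra | exact: sqnorm_nonneg].
have -> : c * c = Rsqr c by []. by rewrite sqrt_Rsqr_abs.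
Qed.

Lemma sqnorm_le_bound {n} (a : vec n) c : (forall i, Rabs (a i) <= c) -> sqnorm a <= INR n * (c * c).
Proof.
move=> H; rewrite sqnorm_sum -sumI_const; apply: sumI_le => i.
have := H i; have := Rabs_pos (a i).
move=> h1 h2. have : Rabs (a i * a i) <= c * c.
  rewrite Rabs_mult; apply: Rmult_le_compat => //.
move=> h3. apply: Rle_trans h3. exact: Rle_abs.
Qed.

Lemma norm_le_bound {n} (a : vec n) c : 0 <= c -> (forall i, Rabs (a i) <= c) -> norm a <= sqrt (INR n) * c.
Proof.
move=> Hc H. have := sqnorm_le_bound a c H.
rewrite /norm => h. rewrite -(sqrt_Rsqr c) // -sqrt_mult; [|exact: pos_INR| rewrite /Rsqr; nra].
apply: sqrt_le_1_alt. by rewrite /Rsqr.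
Qed.

Lemma sqnorm_lt_norm {n} (a : vec n) e : 0 < e -> sqnorm a < e * e -> norm a < e.
Proof.
move=> He H. rewrite /norm -(sqrt_Rsqr e); last lra.
apply: sqrt_lt_1_alt; split; [exact: sqnorm_nonneg| by rewrite /Rsqr].
Qed.

Lemma norm_lt_sqnorm {n} (a : vec n) e : norm a < e -> sqnorm a < e * e.
Proof. move=> H; rewrite -norm_sq; have := norm_nonneg a; nra. Qed.

Lemma inner_le {n} (a b : vec n) : inner a b <= norm a * norm b.
Proof. have := CS a b; have := Rle_abs (inner a b); lra. Qed.

Lemma norm_triangle {n} (a b : vec n) : norm (vadd a b) <= norm a + norm b.
Proof.
have Hs : sqnorm (vadd a b) = sqnorm a + 2 * inner a b + sqnorm b.
  rewrite !sqnorm_sum inner_sum -sumI_scal -!sumI_add; apply: sumI_ext => i; rewrite /vadd; ring.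
have := inner_le a b; have := norm_nonneg a; have := norm_nonneg b.
have := norm_sq a; have := norm_sq b; have := norm_sq (vadd a b); have := norm_nonneg (vadd a b).
rewrite Hs => *. nra.
Qed.

Lemma vec_ext {n} (a b : vec n) : (forall i, a i = b i) -> a = b.
Proof. move=> H; exact: functional_extensionality. Qed.

Lemma norm_ext {n} (a b : vec n) : (forall i, a i = b i) -> norm a = norm b.
Proof. by move/vec_ext ->. Qed.
Lemma vsub_line {n} (w z : vec n) t :
  vadd (vscal t z) (vscal (1 - t) w) = vadd w (vscal t (vsub z w)).
Proof. apply: vec_ext => i; rewrite /vadd /vscal /vsub; ring. Qed.

Lemma grad_ineq {n} (f : vec n -> R) g : convex f -> is_gradient f g ->
  forall w z, f w + inner (g w) (vsub z w) <= f z.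
Proof.
move=> Hc Hg w z. set v := vsub z w.
suff H : forall eps, 0 < eps -> inner (g w) v <= f z - f w + eps * (norm v + 1).
  have : inner (g w) v <= f z - f w.
    apply: le_epsilon => e He. have := H (e / (norm v + 1)).
    have Hn := norm_nonneg v.
    have -> : e / (norm v + 1) * (norm v + 1) = e by field; lra.
    apply. apply: Rdiv_lt_0_compat => //; lra.
  lra.
move=> eps Heps. have [d [Hd Hdel]] := Hg w eps Heps.
have Hn := norm_nonneg v.
set t := Rmin 1 (d / (2 * (norm v + 1))).
have Ht0 : 0 < t. apply: Rmin_pos; first lra. apply: Rdiv_lt_0_compat; lra.
have Ht1 : t <= 1 by apply: Rmin_l.
have Htd : t * norm v < d.
  have : t <= d / (2 * (norm v + 1)) by apply: Rmin_r.
  move=> h. have : t * norm v <= d / (2 * (norm v + 1)) * norm v by apply: Rmult_le_compat_r.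
  have : d / (2 * (norm v + 1)) * norm v < d.
    have -> : d / (2 * (norm v + 1)) * norm v = d * (norm v / (2 * (norm v + 1))) by field; lra.
    have : norm v / (2 * (norm v + 1)) < 1.
      apply: div_lt_l; lra.
    move=> h2; nra.
  lra.
set q := vadd (vscal t z) (vscal (1 - t) w).
have Hq : vsub q w = vscal t v.
  apply: vec_ext => i; rewrite /q /v /vsub /vadd /vscal; ring.
have Hnq : norm (vsub q w) = t * norm v by rewrite Hq norm_scal Rabs_pos_eq; lra.
have Hc1 := Hc z w t (conj (Rlt_le _ _ Ht0) Ht1).
have := Hdel q. rewrite Hnq => /(_ Htd) Habs.
have Hin : inner (g w) (vsub q w) = t * inner (g w) v.
  rewrite Hq /inner -sumI_scal; apply: sumI_ext => i; rewrite /vscal; ring.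
rewrite Hin in Habs. have := abs_le_inv _ _ Habs => -[Ha _].
rewrite -/q in Hc1.
have : t * inner (g w) v <= t * (f z - f w + eps * (norm v + 1)) by nra.
move=> h. apply: (Rmult_le_reg_l t) => //.
Qed.

Lemma deriv_line {n} (f : vec n -> R) g w v t : is_gradient f g ->
  derivable_pt_lim (fun s => f (vadd w (vscal s v))) t (inner (g (vadd w (vscal t v))) v).
Proof.
move=> Hg eps Heps. set p := vadd w (vscal t v).
have Hn := norm_nonneg v.
have He' : 0 < eps / (2 * (norm v + 1)) by apply: Rdiv_lt_0_compat; lra.
have [d [Hd Hdel]] := Hg p _ He'.
have Hd' : 0 < d / (norm v + 1) by apply: Rdiv_lt_0_compat; lra.
exists (mkposreal _ Hd') => h Hh0 /= Hh.
have Hq : vsub (vadd w (vscal (t + h) v)) p = vscal h v.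
  apply: vec_ext => i; rewrite /p /vsub /vadd /vscal; ring.
have Hnq : norm (vsub (vadd w (vscal (t + h) v)) p) = Rabs h * norm v by rewrite Hq norm_scal.
have Hlt : Rabs h * norm v < d.
  have : Rabs h * norm v <= Rabs h * (norm v + 1) by have := Rabs_pos h; nra.
  have : Rabs h * (norm v + 1) < d.
    have := Rmult_lt_compat_r (norm v + 1) _ _ ltac:(lra) Hh.
    have -> : d / (norm v + 1) * (norm v + 1) = d by field; lra. done.
  lra.
have := Hdel (vadd w (vscal (t + h) v)). rewrite Hnq => /(_ Hlt) Habs.
have Hin : inner (g p) (vsub (vadd w (vscal (t + h) v)) p) = h * inner (g p) v.
  rewrite Hq /inner -sumI_scal; apply: sumI_ext => i; rewrite /vscal; ring.
rewrite Hin in Habs.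
have Hah : 0 < Rabs h by apply: Rabs_pos_lt.
have -> : (f (vadd w (vscal (t + h) v)) - f p) / h - inner (g p) v =
   (f (vadd w (vscal (t + h) v)) - f p - h * inner (g p) v) / h by field.
rewrite /Rdiv Rabs_mult Rabs_inv -/p.
apply: (div_lt_l _ (Rabs h)) => //.
apply: Rle_lt_trans Habs _.
have : eps / (2 * (norm v + 1)) * (Rabs h * norm v) = (Rabs h * eps) * (norm v / (2 * (norm v + 1))).
  field; lra.
move=> ->. have : norm v / (2 * (norm v + 1)) < 1 by apply: div_lt_l; lra.
have : 0 < Rabs h * eps by nra.
have : 0 <= norm v / (2 * (norm v + 1)) by apply: Rmult_le_pos; [lra | apply: Rlt_le; apply: Rinv_0_lt_compat; lra].
move=> *. rewrite (Rmult_comm eps). nra.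
Qed.

Lemma inX_line {n} (l u w z : vec n) t : inX l u w -> inX l u z -> 0 <= t <= 1 ->
  inX l u (vadd w (vscal t (vsub z w))).
Proof.
move=> Hw Hz Ht i; rewrite /vadd /vscal /vsub.
have := Hw i; have := Hz i => *.
split; nra.
Qed.

Lemma descent {n} (f : vec n -> R) g L (l u : vec n) : is_gradient f g -> 0 < L ->
  (forall z w, inX l u z -> inX l u w -> norm (vsub (g z) (g w)) <= L * norm (vsub z w)) ->
  forall w z, inX l u w -> inX l u z ->
  f z <= f w + inner (g w) (vsub z w) + L / 2 * sqnorm (vsub z w).
Proof.
move=> Hg HL HLip w z Hw Hz. set v := vsub z w.
set psi := fun t => f (vadd w (vscal t v)) - (t * inner (g w) v + L / 2 * sqnorm v * (t * t)).
set dpsi := fun t => inner (g (vadd w (vscal t v))) v - (inner (g w) v + L / 2 * sqnorm v * (1 * t + t * 1)).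
have Hd : forall t, 0 <= t <= 1 -> derivable_pt_lim psi t (dpsi t).
  move=> t _. rewrite /psi /dpsi.
  apply: (derivable_pt_lim_minus (fun s => f (vadd w (vscal s v)))
             (fun s => s * inner (g w) v + L / 2 * sqnorm v * (s * s))).
  - exact: deriv_line.
  - apply: (derivable_pt_lim_plus (fun s => s * inner (g w) v) (fun s => L / 2 * sqnorm v * (s * s))).
    + have := derivable_pt_lim_mult id (fct_cte (inner (g w) v)) t 1 0 (derivable_pt_lim_id t)
          (derivable_pt_lim_const _ t).
      rewrite /id /fct_cte. have -> : 1 * inner (g w) v + t * 0 = inner (g w) v by ring. done.
    + apply: (derivable_pt_lim_scal (fun s => s * s)).
      exact: (derivable_pt_lim_mult id id t 1 1 (derivable_pt_lim_id t) (derivable_pt_lim_id t)).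
have [c [Hc Hc01]] := MVT_cor2 psi dpsi 0 1 Rlt_0_1 Hd.
have Hneg : dpsi c <= 0.
  rewrite /dpsi.
  have Hpc : inX l u (vadd w (vscal c v)) by apply: inX_line => //; lra.
  have Hlip := HLip _ _ Hpc Hw.
  have Hvs : vsub (vadd w (vscal c v)) w = vscal c v.
    apply: vec_ext => i; rewrite /vsub /vadd /vscal; ring.
  rewrite Hvs norm_scal Rabs_pos_eq in Hlip; last lra.
  have Hdiff : inner (g (vadd w (vscal c v))) v - inner (g w) v = inner (vsub (g (vadd w (vscal c v))) (g w)) v.
    rewrite /inner -sumI_sub; apply: sumI_ext => i; rewrite /vsub; ring.
  have := inner_le (vsub (g (vadd w (vscal c v))) (g w)) v.
  have := norm_nonneg v. have := norm_sq v.
  have := norm_nonneg (vsub (g (vadd w (vscal c v))) (g w)).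
  move=> *. nra.
have Hz1 : vadd w (vscal 1 v) = z by apply: vec_ext => i; rewrite /vadd /vscal /v /vsub; ring.
have Hz0 : vadd w (vscal 0 v) = w by apply: vec_ext => i; rewrite /vadd /vscal; ring.
move: Hc; rewrite /psi Hz1 Hz0. nra.
Qed.
From mathcomp Require Import zify.
From Stdlib Require Import Lia.

Fixpoint ps (a : nat -> R) (K m : nat) : R :=
  match m with O => 0 | S m' => ps a K m' + a (K + m')%nat end.

Lemma ps_nonneg a K m : (forall j, 0 <= a j) -> 0 <= ps a K m.
Proof. move=> H; elim: m => [|m IH] /=; [lra| have := H (K + m)%nat; lra]. Qed.

Lemma ps_le a b K m : (forall j, a j <= b j) -> ps a K m <= ps b K m.
Proof. move=> H; elim: m => [|m IH] /=; [lra| have := H (K + m)%nat; lra]. Qed.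

Lemma ps_scal a c K m : ps (fun j => c * a j) K m = c * ps a K m.
Proof. elim: m => [|m IH] /=; [lra| rewrite IH; lra]. Qed.

Lemma ps_split a K m : ps a K (S m) = a K + ps a (S K) m.
Proof.
elim: m => [|m IH]; first by rewrite /= addn0; lra.
change (ps a K m.+2) with (ps a K m.+1 + a (K + m.+1)%nat).
rewrite IH. change (ps a K.+1 m.+1) with (ps a K.+1 m + a (K.+1 + m)%nat).
rewrite addSnnS; lra.
Qed.

Lemma ps_tele c t K m : (forall j, (K <= j)%nat -> c (S j) <= c j + t j) ->
  c (K + m)%nat <= c K + ps t K m.
Proof.
move=> H; elim: m => [|m IH] /=; first by rewrite addn0; lra.
rewrite addnS. have := H (K + m)%nat (leq_addr _ _). lra.
Qed.

Lemma ps_tele_eq h K m : ps (fun j => h j - h (S j)) K m = h K - h (K + m)%nat.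
Proof.
elim: m => [|m IH] /=; first by rewrite addn0; lra.
rewrite IH addnS; lra.
Qed.

Lemma rec_sum a b om K : 0 <= om ->
  (forall j, (K <= j)%nat -> a (S j) <= om * a j + b j) ->
  forall m, (1 - om) * ps a (S K) m + om * a (K + m)%nat <= om * a K + ps b K m.
Proof.
move=> Hom H; elim=> [|m IH] /=; first by rewrite addn0; lra.
have -> : (K.+1 + m)%nat = S (K + m) by lia.
rewrite addnS. have := H (K + m)%nat (leq_addr _ _). lra.
Qed.

Lemma rec_to0 (a b : nat -> R) om M : 0 <= om < 1 -> 0 <= M -> (forall k, 0 <= a k <= M) ->
  (forall k, a (S k) <= om * a k + b k) ->
  (forall e, 0 < e -> exists K, forall k, (K <= k)%nat -> b k <= e) ->
  forall e, 0 < e -> exists K, forall k, (K <= k)%nat -> a k <= e.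
Proof.
move=> [Hom0 Hom1] HM Ha Hrec Hb e He.
have [K1 HK1] := Hb (e * (1 - om) / 2) ltac:(apply: Rmult_lt_0_compat; nra).
have Hind : forall j, a (K1 + j)%nat <= om ^ j * M + e / 2.
  elim=> [|j IH]; first by rewrite addn0 /=; have := Ha K1; lra.
  rewrite addnS. have := Hrec (K1 + j)%nat. have := HK1 (K1 + j)%nat (leq_addr _ _).
  rewrite /=. move=> h1 h2. have h3 : om * a (K1 + j)%nat <= om * (om ^ j * M + e / 2).
    by apply: Rmult_le_compat_l.
  lra.
have [J HJ] := pow_lt_1_zero om ltac:(rewrite Rabs_pos_eq; lra) (e / (2 * (M + 1)))
   ltac:(apply: Rdiv_lt_0_compat; lra).
exists (K1 + J)%nat => k Hk.
have -> : k = (K1 + (k - K1))%nat by lia.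
have := Hind (k - K1)%nat. have := HJ (k - K1)%nat ltac:(apply/leP; lia).
rewrite Rabs_pos_eq; last by apply: pow_le.
move=> h1 h2.
have : om ^ (k - K1) * M <= e / 2.
  have h4 : om ^ (k - K1) * M <= e / (2 * (M + 1)) * M.
    apply: Rmult_le_compat_r => //; lra.
  have : e / (2 * (M + 1)) * M <= e / 2.
    have -> : e / (2 * (M + 1)) * M = e / 2 * (M / (M + 1)) by field; lra.
    have : M / (M + 1) <= 1.
      have -> : M / (M + 1) = 1 - 1 / (M + 1) by field; lra.
      have : 0 < 1 / (M + 1) by apply: Rdiv_lt_0_compat; lra. lra.
    move=> h5; nra.
  lra.
lra.
Qed.
From Stdlib Require Import IndefiniteDescription.

Definition sinc (psi : nat -> nat) := forall j, (psi j < psi (S j))%nat.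

Lemma sinc_ge psi : sinc psi -> forall j, (j <= psi j)%nat.
Proof. move=> H; elim=> [|j IH] //; have := H j; lia. Qed.

Lemma sinc_mono psi : sinc psi -> forall i j, (i <= j)%nat -> (psi i <= psi j)%nat.
Proof.
move=> H i j Hij. have -> : j = (i + (j - i))%nat by lia.
elim: (j - i)%nat => [|m IH]; first by rewrite addn0.
rewrite addnS; have := H (i + m)%nat; lia.
Qed.

Lemma sinc_comp phi psi : sinc phi -> sinc psi -> sinc (fun j => phi (psi j)).
Proof.
move=> H1 H2 j. have := H2 j => h. have := sinc_mono phi H1 (psi j).+1 (psi j.+1) h.
have := H1 (psi j); lia.
Qed.

Lemma cv_sub u l psi : sinc psi -> Un_cv u l -> Un_cv (fun j => u (psi j)) l.
Proof.
move=> Hs H e He. have [N HN] := H e He. exists N => j Hj. apply: HN.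
have := sinc_ge psi Hs j. move/leP: Hj => Hj. move=> h. apply/leP. lia.
Qed.

Lemma refine1 (a : nat -> R) lo hi : (forall k, lo <= a k <= hi) ->
  exists psi c, sinc psi /\ Un_cv (fun j => a (psi j)) c.
Proof.
move=> Ha.
have [c Hc] := Bolzano_Weierstrass a (fun c => lo <= c <= hi) (compact_P3 lo hi) Ha.
have Hsel : forall N j, exists p, (N <= p)%nat /\ Rabs (a p - c) < / INR (S j).
  move=> N j. have Hp : 0 < / INR (S j) by apply: Rinv_0_lt_compat; apply: lt_0_INR; lia.
  have [p [Hp1 Hp2]] := Hc (disc c (mkposreal _ Hp)) N ltac:(by exists (mkposreal _ Hp)).
  exists p; split; [apply/leP; exact: Hp1 | exact: Hp2].
pose sel N j := proj1_sig (constructive_indefinite_description _ (Hsel N j)).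
have Hsel1 : forall N j, (N <= sel N j)%nat /\ Rabs (a (sel N j) - c) < / INR (S j).
  move=> N j; exact: (proj2_sig (constructive_indefinite_description _ (Hsel N j))).
pose psi := fix psi j := match j with O => sel O O | S j' => sel (S (psi j')) j end.
exists psi, c; split.
- move=> j. have := (Hsel1 (S (psi j)) (S j)).1. rewrite /=. done.
- move=> e He. have [N [HN HN0]] := archimed_cor1 e He. exists N => j Hj.
  have Hj2 : Rabs (a (psi j) - c) < / INR (S j).
    case: j Hj => [|j] Hj; [exact: (Hsel1 O O).2 | exact: (Hsel1 (S (psi j)) (S j)).2].
  rewrite /Rdist. apply: Rlt_trans Hj2 _. apply: Rle_lt_trans HN.
  apply: Rinv_le_contravar; first by apply: lt_0_INR; lia.
  apply: le_INR. move/leP: Hj. lia.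
Qed.

Lemma cluster_exists {n} (l u : vec n) (x : nat -> vec n) :
  (forall k, inX l u (x k)) -> exists xs, cluster_point x xs.
Proof.
move=> Hx.
have Hall : forall s : seq 'I_n, exists phi (c : vec n), sinc phi /\
    forall i, i \in s -> Un_cv (fun j => x (phi j) i) (c i).
  elim=> [|a s [phi [c [Hphi Hc]]]].
  - exists (fun j : nat => j), (fun _ => 0); split => // j /=; lia.
  - have [psi [ca [Hpsi Hca]]] := refine1 (fun j => x (phi j) a) (l a) (u a) (fun k => Hx (phi k) a).
    exists (fun j => phi (psi j)), (fun i => if i == a then ca else c i); split.
      exact: sinc_comp.
    move=> i; rewrite in_cons; case: (eqVneq i a) => [->|Hia] Hi.
    + exact: Hca.
    + exact: (cv_sub (fun j => x (phi j) i) _ _ Hpsi (Hc i Hi)).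
have [phi [c [Hphi Hc]]] := Hall (enum 'I_n).
exists c => e He N.
set eta := e / (sqrt (INR n) + 1).
have Hsq := sqrt_pos (INR n).
have Heta : 0 < eta by apply: Rdiv_lt_0_compat; lra.
have [J HJ] := finite_eventually n (fun i j => Rabs (x (phi j) i - c i) < eta)
   ltac:(move=> i; have [J HJ] := Hc i ltac:(by rewrite mem_enum) eta Heta;
         exists J => k Hk; apply: HJ; apply/leP; exact: Hk).
exists (phi (maxn J N)); split.
  apply: leq_trans (leq_maxr J N) (sinc_ge _ Hphi _).
have := norm_le_bound (vsub (x (phi (maxn J N))) c) eta (Rlt_le _ _ Heta)
  ltac:(move=> i; apply: Rlt_le; apply: HJ (leq_maxl _ _) i).
move=> h. apply: Rle_lt_trans h _.
have -> : sqrt (INR n) * eta = e * (sqrt (INR n) / (sqrt (INR n) + 1)) by rewrite /eta; field; lra.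
have : sqrt (INR n) / (sqrt (INR n) + 1) < 1 by apply: div_lt_l; lra.
move=> h; nra.
Qed.
Definition ind (t : R) : R := if Req_EM_T t 0 then 0 else 1.
Lemma l0_sum {n} (x : vec n) : l0 x = sumI (fun i => ind (x i)). Proof. reflexivity. Qed.
Lemma ind_0 : ind 0 = 0. Proof. rewrite /ind; destruct (Req_EM_T 0 0); [done | lra]. Qed.
Lemma ind_nz t : t <> 0 -> ind t = 1. Proof. move=> H; rewrite /ind; destruct (Req_EM_T t 0); [contradiction | done]. Qed.
Lemma ind_bnd t : 0 <= ind t <= 1. Proof. unfold ind; case (Req_EM_T t 0); intros; simpl; lra. Qed.
Lemma l0_nonneg {n} (x : vec n) : 0 <= l0 x.
Proof. rewrite l0_sum; apply: sumI_nonneg => i; exact: (ind_bnd _).1. Qed.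

Lemma supp_l0 {n} (z xp : vec n) : (forall i, xp i = 0 -> z i = 0) -> l0 z <= l0 xp.
Proof.
move=> H; rewrite !l0_sum; apply: sumI_le => i /=. case: (Req_dec (xp i) 0) => [h|h].
- rewrite h (H i h); lra.
- rewrite (ind_nz _ h); exact: (ind_bnd _).2.
Qed.

Lemma supp_l0_eq {n} (z xp : vec n) : (forall i, xp i = 0 <-> z i = 0) -> l0 z = l0 xp.
Proof.
move=> H; rewrite !l0_sum; apply: sumI_ext => i /=. case: (Req_dec (xp i) 0) => [h|h].
- rewrite h ((H i).1 h); lra.
- rewrite (ind_nz _ h) ind_nz // => h'; apply: h; exact: (H i).2.
Qed.

Definition Qf {n} L mu (g : vec n -> vec n) (y z : vec n) :=
  L / 2 * sqnorm (vadd (vsub z y) (vscal (1 / L) (g y))) + mu / 2 * sqnorm (vsub z y).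

Lemma subobj_Q {n} lam L mu (g : vec n -> vec n) y z :
  subobj lam L mu g y z = lam * l0 z + Qf L mu g y z.
Proof. rewrite /subobj /Qf; ring. Qed.

Lemma Qf_expand {n} L mu (g : vec n -> vec n) y z : 0 < L ->
  Qf L mu g y z = inner (g y) (vsub z y) + (L + mu) / 2 * sqnorm (vsub z y) + 1 / (2 * L) * sqnorm (g y).
Proof.
move=> HL. rewrite /Qf !sqnorm_sum inner_sum -!sumI_scal -!sumI_add.
apply: sumI_ext => i; rewrite /vadd /vsub /vscal; field; lra.
Qed.

Lemma inner_vsub_self {n} (a y : vec n) : inner a (vsub y y) = 0.
Proof.
rewrite inner_sum (sumI_ext _ (fun _ => 0)); first by rewrite sumI_const; ring.
move=> i; rewrite /vsub; ring.
Qed.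

Lemma sqnorm_vsub_self {n} (y : vec n) : sqnorm (vsub y y) = 0.
Proof. exact: inner_vsub_self. Qed.

Definition MinP {n} lam L mu (l u : vec n) g (y xp : vec n) :=
  inX l u xp /\ forall z, inX l u z -> subobj lam L mu g y xp <= subobj lam L mu g y z.

Lemma step_descent {n} lam L mu (l u : vec n) f g y xp :
  0 < L -> is_gradient f g ->
  (forall z w, inX l u z -> inX l u w -> norm (vsub (g z) (g w)) <= L * norm (vsub z w)) ->
  inX l u y -> MinP lam L mu l u g y xp ->
  Hfin lam f xp + mu / 2 * sqnorm (vsub xp y) <= lam * l0 y + f y.
Proof.
move=> HL Hg HLip Hy [Hxp Hmin].
have := Hmin y Hy. rewrite !subobj_Q !Qf_expand // inner_vsub_self sqnorm_vsub_self.
have := descent f g L l u Hg HL HLip y xp Hy Hxp.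
rewrite /Hfin. move=> h1 h2. nra.
Qed.

Lemma pos_lemma A B : 0 <= B -> (forall t, 0 < t <= 1 -> 0 <= t * A + t * t * B) -> 0 <= A.
Proof.
move=> HB H. case: (Rle_lt_dec 0 A) => // HA.
set t := Rmin 1 (- A / (2 * B + 1)).
have Ht0 : 0 < t by apply: Rmin_pos; [lra | apply: Rdiv_lt_0_compat; lra].
have Ht1 : t <= 1 by apply: Rmin_l.
have Ht2 : t <= - A / (2 * B + 1) by apply: Rmin_r.
have := H t (conj Ht0 Ht1).
have : t * (2 * B + 1) <= - A.
  have := Rmult_le_compat_r (2 * B + 1) _ _ ltac:(lra) Ht2.
  have -> : - A / (2 * B + 1) * (2 * B + 1) = - A by field; lra. done.
nra.
Qed.

Lemma three_point {n} lam L mu (l u : vec n) g y xp z :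
  0 < lam -> 0 < L -> 0 < mu -> MinP lam L mu l u g y xp -> inX l u z ->
  (forall i, xp i = 0 -> z i = 0) ->
  Qf L mu g y xp + (L + mu) / 2 * sqnorm (vsub z xp) <= Qf L mu g y z.
Proof.
move=> Hlam HL Hmu [Hxp Hmin] Hz Hsupp.
have Ha : forall w, inX l u w -> (forall i, xp i = 0 -> w i = 0) -> Qf L mu g y xp <= Qf L mu g y w.
  move=> w Hw Hs. have := Hmin w Hw. rewrite !subobj_Q. have := supp_l0 w xp Hs. nra.
set v := vsub z xp.
set A := sumI (fun i => ((L + mu) * (xp i - y i) + g y i) * v i).
set B := (L + mu) / 2 * sqnorm v.
have Hid : forall t, Qf L mu g y (vadd xp (vscal t v)) = Qf L mu g y xp + t * A + t * t * B.
  move=> t. rewrite !Qf_expand // /A /B !sqnorm_sum !inner_sum -!sumI_scal -!sumI_add.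
  apply: sumI_ext => i; rewrite /vadd /vsub /vscal /v /vsub; field; lra.
have HB : 0 <= B by apply: Rmult_le_pos; [lra | exact: sqnorm_nonneg].
have HA : 0 <= A.
  apply: (pos_lemma A B HB) => t Ht.
  have := Ha (vadd xp (vscal t v)) (inX_line l u xp z t Hxp Hz ltac:(lra))
    ltac:(move=> i hi; rewrite /vadd /vscal /v /vsub hi (Hsupp i hi); ring).
  rewrite Hid; lra.
have Hz1 : vadd xp (vscal 1 v) = z by apply: vec_ext => i; rewrite /vadd /vscal /v /vsub; ring.
have := Hid 1. rewrite Hz1 -/B. lra.
Qed.

Lemma key_ineq {n} lam L mu (l u : vec n) f g y xp z :
  0 < lam -> 0 < L -> 0 < mu -> convex f -> is_gradient f g ->
  (forall z w, inX l u z -> inX l u w -> norm (vsub (g z) (g w)) <= L * norm (vsub z w)) ->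
  inX l u y -> MinP lam L mu l u g y xp -> inX l u z ->
  (forall i, xp i = 0 -> z i = 0) ->
  f xp + (L + mu) / 2 * sqnorm (vsub z xp) + mu / 2 * sqnorm (vsub xp y)
    <= f z + (L + mu) / 2 * sqnorm (vsub z y).
Proof.
move=> Hlam HL Hmu Hc Hg HLip Hy Hm Hz Hs.
have H1 := three_point lam L mu l u g y xp z Hlam HL Hmu Hm Hz Hs.
rewrite !Qf_expand // in H1.
have H2 := descent f g L l u Hg HL HLip y xp Hy Hm.1.
have H3 := grad_ineq f g Hc Hg y z.
nra.
Qed.

Lemma threshold {n} lam L mu (l u : vec n) g y xp i B :
  0 < lam -> 0 < L -> 0 < mu -> MinP lam L mu l u g y xp ->
  l i <= 0 <= u i -> xp i <> 0 -> Rabs ((L + mu) * y i - g y i) <= B ->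
  lam / (B + 1) <= Rabs (xp i).
Proof.
move=> Hlam HL Hmu [Hxp Hmin] Hi Hnz HB.
set z := fun j => if j == i then 0 else xp j.
have Hz : inX l u z.
  move=> j; rewrite /z; case: (eqVneq j i) => [->|_]; [lra | exact: Hxp].
have := Hmin z Hz.
set sc := fun j t => lam * ind t + L / 2 * ((t - y j + 1 / L * g y j) * (t - y j + 1 / L * g y j))
     + mu / 2 * ((t - y j) * (t - y j)).
have Hs : forall w, subobj lam L mu g y w = sumI (fun j => sc j (w j)).
  move=> w. rewrite /subobj l0_sum !sqnorm_sum -!sumI_scal -!sumI_add.
  apply: sumI_ext => j; rewrite /sc /vadd /vsub /vscal; ring.
rewrite !Hs. move=> h.
have : sumI (fun j => sc j (xp j) - sc j (z j)) <= 0 by rewrite sumI_sub; lra.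
rewrite (sumI_single _ i); last first.
  move=> j hj; rewrite /z (negbTE hj); ring.
rewrite /z eqxx /sc ind_0 ind_nz //.
move=> h2.
have h3 : lam <= xp i * ((L + mu) * y i - g y i).
  have : lam * 1 + L / 2 * ((xp i - y i + 1 / L * g y i) * (xp i - y i + 1 / L * g y i)) +
    mu / 2 * ((xp i - y i) * (xp i - y i)) -
    (lam * 0 + L / 2 * ((0 - y i + 1 / L * g y i) * (0 - y i + 1 / L * g y i)) +
     mu / 2 * ((0 - y i) * (0 - y i))) =
    lam + (L + mu) / 2 * (xp i * xp i) - xp i * ((L + mu) * y i - g y i) by field; lra.
  have : 0 <= xp i * xp i by nra.
  nra.
have h4 : xp i * ((L + mu) * y i - g y i) <= Rabs (xp i) * B.
  apply: Rle_trans (Rle_abs _) _. rewrite Rabs_mult.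
  apply: Rmult_le_compat_l => //; exact: Rabs_pos.
have hB : 0 <= B by have := Rabs_pos ((L + mu) * y i - g y i); lra.
have := Rabs_pos (xp i) => h5.
apply: (Rmult_le_reg_r (B + 1)); first lra.
have -> : lam / (B + 1) * (B + 1) = lam by field; lra.
nra.
Qed.
From Stdlib Require Import Classical.

Record Hyp {n} (lam L mu om : R) (l u : vec n) (f : vec n -> R) (g : vec n -> vec n)
    (oms : nat -> R) (x y : nat -> vec n) : Prop := mkHyp {
  h_lam : 0 < lam;
  h_lu : forall i, l i <= u i;
  h_cvx : convex f;
  h_grad : is_gradient f g;
  h_lb : exists m, forall z, inX l u z -> m <= f z;
  h_L : 0 < L;
  h_Lip : forall z w, inX l u z -> inX l u w -> norm (vsub (g z) (g w)) <= L * norm (vsub z w);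
  h_mu : 0 < mu;
  h_oms : forall k, 0 <= oms k <= om;
  h_om : om < 1;
  h_alg : algorithm1 lam L mu l u g oms x y }.

Lemma yhat_zero {n} (x : nat -> vec n) om k i : x k i = 0 -> yhat x om k i = x k i.
Proof. move=> H; rewrite /yhat; case (Req_EM_T (x k i) 0) => //= h; contradiction. Qed.
Lemma yhat_nz {n} (x : nat -> vec n) om k i : x k i <> 0 ->
  yhat x om k i = x k i + om k * (x k i - xprev x k i).
Proof. move=> H; rewrite /yhat; case (Req_EM_T (x k i) 0) => //= h; contradiction. Qed.


Lemma A_step {n} lam L mu om (l u : vec n) f g oms x y :
  Hyp lam L mu om l u f g oms x y -> forall k,
  (inner (vsub (yhat x oms k) (x k)) (g (yhat x oms k)) > 0 \/ ~ inX l u (yhat x oms k) -> y (S k) = x k) /\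
  (~ (inner (vsub (yhat x oms k) (x k)) (g (yhat x oms k)) > 0 \/ ~ inX l u (yhat x oms k)) ->
     y (S k) = yhat x oms k) /\
  inX l u (x (S k)) /\ MinP lam L mu l u g (y (S k)) (x (S k)).
Proof.
move=> H k. have [_ Hk] := h_alg _ _ _ _ _ _ _ _ _ _ _ H.
have [[H1 H2] [H3 H4]] := Hk k. by split; [|split; [|split]].
Qed.

Lemma A_x {n} lam L mu om (l u : vec n) f g oms x y :
  Hyp lam L mu om l u f g oms x y -> forall k, inX l u (x k).
Proof.
move=> H [|k]; first by have [? _] := h_alg _ _ _ _ _ _ _ _ _ _ _ H.
by have [_ [_ [? _]]] := A_step _ _ _ _ _ _ _ _ _ _ _ H k.
Qed.

Lemma A_y {n} lam L mu om (l u : vec n) f g oms x y :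
  Hyp lam L mu om l u f g oms x y -> forall k, inX l u (y (S k)).
Proof.
move=> H k. have [H1 [H2 _]] := A_step _ _ _ _ _ _ _ _ _ _ _ H k.
case: (classic (inner (vsub (yhat x oms k) (x k)) (g (yhat x oms k)) > 0 \/ ~ inX l u (yhat x oms k))) => Hc.
- rewrite H1 //; exact: (A_x _ _ _ _ _ _ _ _ _ _ _ H).
- rewrite H2 //. apply: NNPP => h; apply: Hc; by right.
Qed.

Lemma A_min {n} lam L mu om (l u : vec n) f g oms x y :
  Hyp lam L mu om l u f g oms x y -> forall k, MinP lam L mu l u g (y (S k)) (x (S k)).
Proof. move=> H k. by have [_ [_ [_ ?]]] := A_step _ _ _ _ _ _ _ _ _ _ _ H k. Qed.

Lemma A_beta {n} lam L mu om (l u : vec n) f g oms x y :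
  Hyp lam L mu om l u f g oms x y -> forall k, exists b, 0 <= b <= om /\
  forall i, (x k i <> 0 -> y (S k) i = x k i + b * (x k i - xprev x k i)) /\
            (x k i = 0 -> y (S k) i = x k i).
Proof.
move=> H k. have [H1 [H2 _]] := A_step _ _ _ _ _ _ _ _ _ _ _ H k.
have Hom := h_oms _ _ _ _ _ _ _ _ _ _ _ H k.
case: (classic (inner (vsub (yhat x oms k) (x k)) (g (yhat x oms k)) > 0 \/ ~ inX l u (yhat x oms k))) => Hc.
- exists 0; split; first lra. move=> i; rewrite H1 //; split => _; ring.
- exists (oms k); split => // i; rewrite H2 //; split; [exact: yhat_nz | exact: yhat_zero].
Qed.

Lemma A_desc {n} lam L mu om (l u : vec n) f g oms x y :
  Hyp lam L mu om l u f g oms x y -> forall k,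
  Hfin lam f (x (S k)) + mu / 2 * sqnorm (vsub (x (S k)) (y (S k))) <= Hfin lam f (x k).
Proof.
move=> H k.
have Hd := step_descent lam L mu l u f g (y (S k)) (x (S k)) (h_L _ _ _ _ _ _ _ _ _ _ _ H)
  (h_grad _ _ _ _ _ _ _ _ _ _ _ H) (h_Lip _ _ _ _ _ _ _ _ _ _ _ H)
  (A_y _ _ _ _ _ _ _ _ _ _ _ H k) (A_min _ _ _ _ _ _ _ _ _ _ _ H k).
suff : lam * l0 (y (S k)) + f (y (S k)) <= Hfin lam f (x k) by lra.
have [H1 [H2 _]] := A_step _ _ _ _ _ _ _ _ _ _ _ H k.
have Hlam := h_lam _ _ _ _ _ _ _ _ _ _ _ H.
case: (classic (inner (vsub (yhat x oms k) (x k)) (g (yhat x oms k)) > 0 \/ ~ inX l u (yhat x oms k))) => Hc.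
- rewrite H1 //. rewrite /Hfin; lra.
- rewrite H2 //.
  have Hin : ~ inner (vsub (yhat x oms k) (x k)) (g (yhat x oms k)) > 0 by move=> h; apply: Hc; left.
  have Hl0 : l0 (yhat x oms k) <= l0 (x k).
    apply: supp_l0 => i hi; rewrite yhat_zero //.
  have Hg := grad_ineq f g (h_cvx _ _ _ _ _ _ _ _ _ _ _ H) (h_grad _ _ _ _ _ _ _ _ _ _ _ H)
    (yhat x oms k) (x k).
  have : inner (g (yhat x oms k)) (vsub (x k) (yhat x oms k)) =
         - inner (vsub (yhat x oms k) (x k)) (g (yhat x oms k)).
    rewrite !inner_sum -sumI_opp; apply: sumI_ext => i; rewrite /vsub; ring.
  rewrite /Hfin. nra.
Qed.

Lemma A_mono {n} lam L mu om (l u : vec n) f g oms x y :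
  Hyp lam L mu om l u f g oms x y -> forall k m, (k <= m)%nat -> Hfin lam f (x m) <= Hfin lam f (x k).
Proof.
move=> H k m Hkm. have -> : m = (k + (m - k))%nat by lia.
elim: (m - k)%nat => [|j IH]; first by rewrite addn0; lra.
rewrite addnS. have := A_desc _ _ _ _ _ _ _ _ _ _ _ H (k + j)%nat.
have := sqnorm_nonneg (vsub (x (k + j).+1) (y (k + j).+1)).
have := h_mu _ _ _ _ _ _ _ _ _ _ _ H. nra.
Qed.

Lemma A_lb {n} lam L mu om (l u : vec n) f g oms x y :
  Hyp lam L mu om l u f g oms x y -> exists m, forall k, m <= Hfin lam f (x k).
Proof.
move=> H. have [m Hm] := h_lb _ _ _ _ _ _ _ _ _ _ _ H. exists m => k.
have := Hm _ (A_x _ _ _ _ _ _ _ _ _ _ _ H k). have := l0_nonneg (x k).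
have := h_lam _ _ _ _ _ _ _ _ _ _ _ H. rewrite /Hfin; nra.
Qed.

Lemma A_thr {n} lam L mu om (l u : vec n) f g oms x y :
  Hyp lam L mu om l u f g oms x y -> exists d, 0 < d /\
  forall k i, x (S k) i <> 0 -> d <= Rabs (x (S k) i).
Proof.
move=> H.
have Hlam := h_lam _ _ _ _ _ _ _ _ _ _ _ H. have HL := h_L _ _ _ _ _ _ _ _ _ _ _ H.
have Hmu := h_mu _ _ _ _ _ _ _ _ _ _ _ H. have Hlu := h_lu _ _ _ _ _ _ _ _ _ _ _ H.
set W := sumI (fun j => u j - l j).
set B := fun i => (L + mu) * (Rabs (l i) + Rabs (u i)) + Rabs (g l i) + L * (sqrt (INR n) * W).
have HW : 0 <= W by apply: sumI_nonneg => j; have := Hlu j; lra.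
have HlX : inX l u l by move=> j; have := Hlu j; lra.
have HB : forall y0 i, inX l u y0 -> Rabs ((L + mu) * y0 i - g y0 i) <= B i.
  move=> y0 i Hy0.
  have h1 : Rabs (y0 i) <= Rabs (l i) + Rabs (u i).
    have := Hy0 i. move=> [? ?]. rewrite /Rabs. repeat case: Rcase_abs; lra.
  have h2 : norm (vsub y0 l) <= sqrt (INR n) * W.
    apply: norm_le_bound => // j. rewrite /vsub Rabs_pos_eq; last by have := Hy0 j; lra.
    have := Hy0 j. have := sumI_term (fun j => u j - l j) j ltac:(move=> j'; have := Hlu j'; lra).
    rewrite -/W. lra.
  have h3 : Rabs (g y0 i - g l i) <= L * (sqrt (INR n) * W).
    have : Rabs (g y0 i - g l i) <= norm (vsub (g y0) (g l)) := comp_le_norm (vsub (g y0) (g l)) i.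
    have := h_Lip _ _ _ _ _ _ _ _ _ _ _ H y0 l Hy0 HlX. 
    have := Rmult_le_compat_l L _ _ (Rlt_le _ _ HL) h2. lra.
  have : Rabs ((L + mu) * y0 i - g y0 i) <= (L + mu) * Rabs (y0 i) + (Rabs (g l i) + Rabs (g y0 i - g l i)).
    have -> : (L + mu) * y0 i - g y0 i = (L + mu) * y0 i + (- (g y0 i - g l i) - g l i) by ring.
    apply: Rle_trans (Rabs_triang _ _) _. rewrite Rabs_mult (Rabs_pos_eq (L + mu)); last lra.
    apply: Rplus_le_compat_l. apply: Rle_trans (Rabs_triang _ _) _. rewrite !Rabs_Ropp. lra.
  have := Rmult_le_compat_l (L + mu) _ _ ltac:(lra) h1. rewrite /B. lra.
set dl := fun i => if Rle_dec (l i) 0 then (if Rle_dec 0 (u i) then lam / (B i + 1) else - u i) else l i.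
have Hdl : forall i, 0 < dl i.
  move=> i; rewrite /dl; case: Rle_dec => h1 /=; [case: Rle_dec => h2 /=|]; try lra.
  apply: Rdiv_lt_0_compat => //. rewrite /B.
  have := Rabs_pos (l i); have := Rabs_pos (u i); have := Rabs_pos (g l i).
  have := sqrt_pos (INR n). move=> *.
  have : 0 <= L * (sqrt (INR n) * W) by apply: Rmult_le_pos; [lra| apply: Rmult_le_pos].
  have : 0 <= (L + mu) * (Rabs (l i) + Rabs (u i)) by apply: Rmult_le_pos; lra.
  lra.
have [d [Hd Hdd]] := finite_pos_lb n dl Hdl.
exists d; split => // k i Hnz.
apply: Rle_trans (Hdd i) _.
have Hxi := A_x _ _ _ _ _ _ _ _ _ _ _ H (S k) i.
rewrite /dl; case: Rle_dec => h1 /=; [case: Rle_dec => h2 /=|].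
- apply: (threshold lam L mu l u g (y (S k)) (x (S k)) i (B i)) => //.
  + exact: A_min H k.
  + apply: HB. exact: A_y H k.
- rewrite Rabs_left; lra.
- rewrite Rabs_pos_eq; lra.
Qed.
Lemma f_cont {n} (f : vec n -> R) g : is_gradient f g -> forall p,
  exists r C, 0 < r /\ 0 <= C /\ forall z, norm (vsub z p) < r -> Rabs (f z - f p) <= C * norm (vsub z p).
Proof.
move=> Hg p. have [r [Hr Hrr]] := Hg p 1 Rlt_0_1.
exists r, (norm (g p) + 1); split => //; split; first by have := norm_nonneg (g p); lra.
move=> z Hz. have := Hrr z Hz. have := CS (g p) (vsub z p).
have := norm_nonneg (g p); have := norm_nonneg (vsub z p).
move=> h1 h2 h3 h4.
have := abs_le_inv _ _ h4. have := abs_le_inv _ _ h3. move=> [? ?] [? ?].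
apply: Rabs_le; split; nra.
Qed.

Lemma le_eps a b : (forall e, 0 < e -> a <= b + e) -> a <= b.
Proof. exact: le_epsilon. Qed.

Definition supp_eq {n} (a b : vec n) := forall i, a i = 0 <-> b i = 0.


Lemma B_inX {n} lam L mu om (l u : vec n) f g oms x y xs :
  Hyp lam L mu om l u f g oms x y -> cluster_point x xs -> inX l u xs.
Proof.
move=> H Hc i. have Hx := A_x _ _ _ _ _ _ _ _ _ _ _ H.
split; apply: Rnot_lt_le => h.
- have [k [_ Hk]] := Hc (l i - xs i) ltac:(lra) O.
  have h2 : Rabs (x k i - xs i) <= norm (vsub (x k) xs) := comp_le_norm (vsub (x k) xs) i.
  have := Hx k i. move=> [? ?]. have := Rle_abs (x k i - xs i). lra.
- have [k [_ Hk]] := Hc (xs i - u i) ltac:(lra) O.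
  have h2 : Rabs (x k i - xs i) <= norm (vsub (x k) xs) := comp_le_norm (vsub (x k) xs) i.
  have := Hx k i. move=> [? ?]. have := Rle_abs (xs i - x k i). rewrite -Rabs_Ropp. 
  have -> : - (xs i - x k i) = x k i - xs i by ring. lra.
Qed.

Lemma B_thr {n} lam L mu om (l u : vec n) f g oms x y xs d :
  Hyp lam L mu om l u f g oms x y -> cluster_point x xs -> 0 < d ->
  (forall k i, x (S k) i <> 0 -> d <= Rabs (x (S k) i)) ->
  forall i, xs i <> 0 -> d / 2 <= Rabs (xs i).
Proof.
move=> H Hc Hd Hthr i Hi. apply: Rnot_lt_le => h.
have Ha : 0 < Rabs (xs i) by apply: Rabs_pos_lt.
set e := Rmin (Rabs (xs i)) (d / 2 - Rabs (xs i)).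
have He : 0 < e by apply: Rmin_pos; lra.
have [k [Hk1 Hk]] := Hc e He 1%nat.
have Hcomp : Rabs (x k i - xs i) < e.
  have : Rabs (x k i - xs i) <= norm (vsub (x k) xs) := comp_le_norm _ i. lra.
case: k Hk1 Hk Hcomp => [//|k] _ _ Hcomp.
have He1 : e <= Rabs (xs i) by apply: Rmin_l.
have He2 : e <= d / 2 - Rabs (xs i) by apply: Rmin_r.
have Hnz : x (S k) i <> 0.
  move=> h0; rewrite h0 in Hcomp. rewrite Rminus_0_l Rabs_Ropp in Hcomp. lra.
have := Hthr k i Hnz.
have : Rabs (x (S k) i) <= Rabs (x (S k) i - xs i) + Rabs (xs i).
  have -> : x (S k) i = (x (S k) i - xs i) + xs i by ring. 
  have -> : x (S k) i - xs i + xs i - xs i = x (S k) i - xs i by ring.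
  exact: Rabs_triang.
lra.
Qed.

Lemma B_match {n} lam L mu om (l u : vec n) f g oms x y xs :
  Hyp lam L mu om l u f g oms x y -> cluster_point x xs ->
  forall e, 0 < e -> forall N, exists k, (N <= k)%nat /\ (1 <= k)%nat /\
    norm (vsub (x k) xs) < e /\ supp_eq (x k) xs.
Proof.
move=> H Hc e He N.
have [d [Hd Hthr]] := A_thr _ _ _ _ _ _ _ _ _ _ _ H.
have Hthr2 := B_thr _ _ _ _ _ _ _ _ _ _ _ _ d H Hc Hd Hthr.
have [k [Hk1 Hk]] := Hc (Rmin e (d / 2)) ltac:(apply: Rmin_pos; lra) (maxn N 1).
exists k; split; first exact: leq_trans (leq_maxl _ _) Hk1.
split; first exact: leq_trans (leq_maxr _ _) Hk1.
split; first by apply: Rlt_le_trans Hk (Rmin_l _ _).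
have Hk2 : norm (vsub (x k) xs) < d / 2 by apply: Rlt_le_trans Hk (Rmin_r _ _).
case: k Hk1 Hk Hk2 => [|k]; first by move=> h; exfalso; have := leq_trans (leq_maxr N 1) h.
move=> _ _ Hk2 i.
have Hcomp : Rabs (x (S k) i - xs i) < d / 2.
  have : Rabs (x (S k) i - xs i) <= norm (vsub (x (S k)) xs) := comp_le_norm _ i. lra.
split => h0.
- apply: NNPP => hn. have := Hthr2 i hn. rewrite h0 Rminus_0_l Rabs_Ropp in Hcomp. lra.
- apply: NNPP => hn. have := Hthr k i hn. rewrite h0 Rminus_0_r in Hcomp. lra.
Qed.

Lemma B_Hnear {n} lam L mu om (l u : vec n) f g oms x y xs :
  Hyp lam L mu om l u f g oms x y -> cluster_point x xs ->
  forall e, 0 < e -> forall N, exists k, (N <= k)%nat /\ (1 <= k)%nat /\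
    norm (vsub (x k) xs) < e /\ supp_eq (x k) xs /\ Rabs (f (x k) - f xs) <= e /\
    Rabs (Hfin lam f (x k) - Hfin lam f xs) <= e.
Proof.
move=> H Hc e He N.
have [r [C [Hr [HC Hcont]]]] := f_cont f g (h_grad _ _ _ _ _ _ _ _ _ _ _ H) xs.
set e' := Rmin (Rmin e r) (e / (C + 1)).
have He' : 0 < e' by repeat apply: Rmin_pos; try lra; apply: Rdiv_lt_0_compat; lra.
have [k [Hk1 [Hk2 [Hk3 Hk4]]]] := B_match _ _ _ _ _ _ _ _ _ _ _ _ H Hc e' He' N.
have He'1 : e' <= e by apply: Rle_trans (Rmin_l _ _) (Rmin_l _ _).
have He'2 : e' <= r by apply: Rle_trans (Rmin_l _ _) (Rmin_r _ _).
have He'3 : e' <= e / (C + 1) by apply: Rmin_r.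
have Hf : Rabs (f (x k) - f xs) <= e.
  apply: Rle_trans (Hcont (x k) ltac:(lra)) _.
  have := norm_nonneg (vsub (x k) xs) => hn.
  have : C * norm (vsub (x k) xs) <= C * (e / (C + 1)) by apply: Rmult_le_compat_l; lra.
  have : C * (e / (C + 1)) <= e.
    have -> : C * (e / (C + 1)) = e * (C / (C + 1)) by field; lra.
    have : C / (C + 1) <= 1 by apply: Rlt_le; apply: div_lt_l; lra.
    move=> h; nra.
  lra.
exists k; do 4 (split => //; try lra).
rewrite /Hfin (supp_l0_eq (x k) xs) //; last by move=> i; split; move/(Hk4 i).
have -> : lam * l0 xs + f (x k) - (lam * l0 xs + f xs) = f (x k) - f xs by ring. done.
Qed.

Lemma B_Hge {n} lam L mu om (l u : vec n) f g oms x y xs :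
  Hyp lam L mu om l u f g oms x y -> cluster_point x xs ->
  forall k, Hfin lam f xs <= Hfin lam f (x k).
Proof.
move=> H Hc k. apply: le_eps => e He.
have [k' [Hk1 [_ [_ [_ [_ Hk]]]]]] := B_Hnear _ _ _ _ _ _ _ _ _ _ _ _ H Hc e He k.
have := A_mono _ _ _ _ _ _ _ _ _ _ _ H k k' Hk1.
have := abs_le_inv _ _ Hk. lra.
Qed.

Lemma B_Hle {n} lam L mu om (l u : vec n) f g oms x y xs :
  Hyp lam L mu om l u f g oms x y -> cluster_point x xs ->
  forall e, 0 < e -> exists K, forall k, (K <= k)%nat -> Hfin lam f (x k) <= Hfin lam f xs + e.
Proof.
move=> H Hc e He.
have [k' [_ [_ [_ [_ [_ Hk]]]]]] := B_Hnear _ _ _ _ _ _ _ _ _ _ _ _ H Hc e He O.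
exists k' => k Hk1. have := A_mono _ _ _ _ _ _ _ _ _ _ _ H k' k Hk1.
have := abs_le_inv _ _ Hk. lra.
Qed.

Lemma B_E {n} lam L mu om (l u : vec n) f g oms x y xs :
  Hyp lam L mu om l u f g oms x y -> cluster_point x xs ->
  forall k, sqnorm (vsub (x (S k)) (y (S k))) <= 2 / mu * (Hfin lam f (x k) - Hfin lam f (x (S k))).
Proof.
move=> H Hc k. have := A_desc _ _ _ _ _ _ _ _ _ _ _ H k.
have Hmu := h_mu _ _ _ _ _ _ _ _ _ _ _ H.
move=> h. have -> : 2 / mu * (Hfin lam f (x k) - Hfin lam f (x (S k))) =
  (Hfin lam f (x k) - Hfin lam f (x (S k))) * / (mu / 2) by field; lra.
apply: (Rmult_le_reg_r (mu / 2)); first lra.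
rewrite Rmult_assoc Rinv_l; last lra. lra.
Qed.

Lemma B_Esmall {n} lam L mu om (l u : vec n) f g oms x y xs :
  Hyp lam L mu om l u f g oms x y -> cluster_point x xs ->
  forall e, 0 < e -> exists K, forall k, (K <= k)%nat -> sqnorm (vsub (x (S k)) (y (S k))) <= e.
Proof.
move=> H Hc e He. have Hmu := h_mu _ _ _ _ _ _ _ _ _ _ _ H.
have [K HK] := B_Hle _ _ _ _ _ _ _ _ _ _ _ _ H Hc (mu / 2 * e) ltac:(nra).
exists K => k Hk. have := B_E _ _ _ _ _ _ _ _ _ _ _ _ H Hc k.
have := HK k Hk. have := B_Hge _ _ _ _ _ _ _ _ _ _ _ _ H Hc (S k).
move=> h1 h2 h3. apply: Rle_trans h3 _.
have : Hfin lam f (x k) - Hfin lam f (x (S k)) <= mu / 2 * e by lra.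
move=> h4. have : 2 / mu * (Hfin lam f (x k) - Hfin lam f (x (S k))) <= 2 / mu * (mu / 2 * e).
  apply: Rmult_le_compat_l => //. apply: Rlt_le; apply: Rdiv_lt_0_compat; lra.
have -> : 2 / mu * (mu / 2 * e) = e by field; lra. done.
Qed.
Lemma diff_bound {n} (l u z a b : vec n) : inX l u z -> inX l u a -> inX l u b ->
  sqnorm (vsub z b) - sqnorm (vsub z a) <= 2 * sumI (fun j => u j - l j) * norm (vsub a b).
Proof.
move=> Hz Ha Hb.
have -> : sqnorm (vsub z b) - sqnorm (vsub z a) = sumI (fun i => (a i - b i) * (2 * z i - a i - b i)).
  rewrite !sqnorm_sum -sumI_sub; apply: sumI_ext => i; rewrite /vsub; ring.
have -> : 2 * sumI (fun j => u j - l j) * norm (vsub a b) = sumI (fun j => norm (vsub a b) * (2 * (u j - l j))).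
  rewrite sumI_scal -sumI_scal. rewrite Rmult_comm sumI_scal. ring.
apply: sumI_le => i.
have h1 : Rabs (a i - b i) <= norm (vsub a b) := comp_le_norm (vsub a b) i.
have h2 : Rabs (2 * z i - a i - b i) <= 2 * (u i - l i).
  have := Hz i; have := Ha i; have := Hb i => *. apply: Rabs_le; split; lra.
apply: Rle_trans (Rle_abs _) _. rewrite Rabs_mult.
apply: Rmult_le_compat => //; exact: Rabs_pos.
Qed.

Lemma B_face {n} lam L mu om (l u : vec n) f g oms x y xs :
  Hyp lam L mu om l u f g oms x y -> cluster_point x xs ->
  forall z, inX l u z -> (forall i, xs i = 0 -> z i = 0) -> f xs <= f z.
Proof.
move=> H Hc z Hz Hsz. apply: le_eps => eta Heta.
have HL := h_L _ _ _ _ _ _ _ _ _ _ _ H. have Hmu := h_mu _ _ _ _ _ _ _ _ _ _ _ H.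
have Hlu := h_lu _ _ _ _ _ _ _ _ _ _ _ H.
set W := sumI (fun j => u j - l j).
have HW : 0 <= W by apply: sumI_nonneg => j; have := Hlu j; lra.
set e2 := eta / (2 * ((L + mu) * W + 1)).
have HLW : 0 <= (L + mu) * W by apply: Rmult_le_pos; lra.
have He2 : 0 < e2 by apply: Rdiv_lt_0_compat; lra.
have [K HK] := B_Esmall _ _ _ _ _ _ _ _ _ _ _ _ H Hc (e2 * e2 / 2) ltac:(nra).
have [k [Hk1 [Hk2 [_ [Hsupp [Hf _]]]]]] := B_Hnear _ _ _ _ _ _ _ _ _ _ _ _ H Hc (eta / 2) ltac:(lra) (S K).
case: k Hk1 Hk2 Hsupp Hf => [//|k] Hk1 _ Hsupp Hf.
have HkK : (K <= k)%nat by [].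
have Hy := A_y _ _ _ _ _ _ _ _ _ _ _ H k.
have Hm := A_min _ _ _ _ _ _ _ _ _ _ _ H k.
have Hkey := key_ineq lam L mu l u f g (y (S k)) (x (S k)) z (h_lam _ _ _ _ _ _ _ _ _ _ _ H) HL Hmu
   (h_cvx _ _ _ _ _ _ _ _ _ _ _ H) (h_grad _ _ _ _ _ _ _ _ _ _ _ H) (h_Lip _ _ _ _ _ _ _ _ _ _ _ H)
   Hy Hm Hz ltac:(move=> i hi; apply: Hsz; exact: (Hsupp i).1 hi).
have Hdb := diff_bound l u z (x (S k)) (y (S k)) Hz (A_x _ _ _ _ _ _ _ _ _ _ _ H (S k)) Hy.
rewrite -/W in Hdb.
have Hne : norm (vsub (x (S k)) (y (S k))) < e2.
  apply: sqnorm_lt_norm => //. have := HK k HkK. nra.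
have := sqnorm_nonneg (vsub z (x (S k))). have := sqnorm_nonneg (vsub (x (S k)) (y (S k))).
have := abs_le_inv _ _ Hf. move=> [Hf1 _] h1 h2.
have h3 : (L + mu) / 2 * (2 * W * norm (vsub (x (S k)) (y (S k)))) <= (L + mu) * W * e2.
  have := norm_nonneg (vsub (x (S k)) (y (S k))). nra.
have h4 : (L + mu) * W * e2 <= eta / 2.
  rewrite /e2. have -> : (L + mu) * W * (eta / (2 * ((L + mu) * W + 1))) =
     eta / 2 * ((L + mu) * W / ((L + mu) * W + 1)) by field; lra.
  have : (L + mu) * W / ((L + mu) * W + 1) <= 1 by apply: Rlt_le; apply: div_lt_l; lra.
  move=> h; nra.
have h5 : (L + mu) / 2 * sqnorm (vsub z (y (S k))) - (L + mu) / 2 * sqnorm (vsub z (x (S k)))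
   <= (L + mu) / 2 * (2 * W * norm (vsub (x (S k)) (y (S k)))).
  rewrite -Rmult_minus_distr_l. apply: Rmult_le_compat_l; lra.
nra.
Qed.

Lemma B_locmin {n} lam L mu om (l u : vec n) f g oms x y xs :
  Hyp lam L mu om l u f g oms x y -> cluster_point x xs -> local_min lam f l u xs.
Proof.
move=> H Hc. split; first exact: B_inX H Hc.
have Hlam := h_lam _ _ _ _ _ _ _ _ _ _ _ H.
have [d [Hd Hthr]] := A_thr _ _ _ _ _ _ _ _ _ _ _ H.
have Hthr2 := B_thr _ _ _ _ _ _ _ _ _ _ _ _ d H Hc Hd Hthr.
have [r [C [Hr [HC Hcont]]]] := f_cont f g (h_grad _ _ _ _ _ _ _ _ _ _ _ H) xs.
set rho := Rmin (Rmin r (d / 2)) (lam / (C + 1)).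
have Hrho : 0 < rho by repeat apply: Rmin_pos; try lra; apply: Rdiv_lt_0_compat; lra.
have Hr1 : rho <= r by apply: Rle_trans (Rmin_l _ _) (Rmin_l _ _).
have Hr2 : rho <= d / 2 by apply: Rle_trans (Rmin_l _ _) (Rmin_r _ _).
have Hr3 : rho <= lam / (C + 1) by apply: Rmin_r.
exists rho; split => // z Hz Hn.
have Hsup : forall i, xs i <> 0 -> z i <> 0.
  move=> i hi h0. have := Hthr2 i hi.
  have : Rabs (z i - xs i) <= norm (vsub z xs) := comp_le_norm _ i.
  rewrite h0 Rminus_0_l Rabs_Ropp. lra.
have Hfc := Hcont z ltac:(lra).
case: (classic (exists j, xs j = 0 /\ z j <> 0)) => [[j [Hj1 Hj2]]|Hno].
- have Hl0 : l0 xs + 1 <= l0 z.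
    rewrite !l0_sum. apply: (sumI_plus1 _ _ j).
    + move=> i. case: (Req_dec (xs i) 0) => h.
      * rewrite h ind_0; exact: (ind_bnd _).1.
      * rewrite (ind_nz _ h) (ind_nz _ (Hsup i h)); lra.
    + rewrite Hj1 ind_0 (ind_nz _ Hj2); lra.
  have : C * norm (vsub z xs) <= lam.
    have := norm_nonneg (vsub z xs) => hn.
    have : C * norm (vsub z xs) <= C * (lam / (C + 1)) by apply: Rmult_le_compat_l; lra.
    have : C * (lam / (C + 1)) <= lam.
      have -> : C * (lam / (C + 1)) = lam * (C / (C + 1)) by field; lra.
      have : C / (C + 1) <= 1 by apply: Rlt_le; apply: div_lt_l; lra.
      move=> h; nra.
    lra.
  have := abs_le_inv _ _ Hfc. rewrite /Hfin. nra.
- have Hs : forall i, xs i = 0 -> z i = 0.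
    move=> i hi; apply: NNPP => hz; apply: Hno; by exists i.
  have Hl0 : l0 z = l0 xs.
    apply: supp_l0_eq => i; split; first exact: Hs.
    move=> hz; apply: NNPP => hx; exact: Hsup i hx hz.
  have := B_face _ _ _ _ _ _ _ _ _ _ _ _ H Hc z Hz Hs.
  rewrite /Hfin Hl0. lra.
Qed.
Lemma sq_rec a t c w : 0 <= w < 1 -> Rabs t <= w * Rabs c ->
  (a + t) * (a + t) <= a * a / (1 - w) + w * (c * c).
Proof.
move=> Hw Ht.
have HA := Rabs_pos a. have HC := Rabs_pos c. have HT := Rabs_pos t.
have h1 : (a + t) * (a + t) <= (Rabs a + w * Rabs c) * (Rabs a + w * Rabs c).
  have h2 : Rabs (a + t) <= Rabs a + w * Rabs c by have := Rabs_triang a t; lra.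
  have e1 : (a + t) * (a + t) = Rabs (a + t) * Rabs (a + t) by have := Rsqr_abs (a + t); rewrite /Rsqr.
  rewrite e1; apply: Rmult_le_compat => //; exact: Rabs_pos.
have ea : a * a = Rabs a * Rabs a by have := Rsqr_abs a; rewrite /Rsqr.
have ec : c * c = Rabs c * Rabs c by have := Rsqr_abs c; rewrite /Rsqr.
have key : a * a / (1 - w) + w * (c * c) - (Rabs a + w * Rabs c) * (Rabs a + w * Rabs c)
   = w / (1 - w) * ((Rabs a - (1 - w) * Rabs c) * (Rabs a - (1 - w) * Rabs c)).
  rewrite ea ec; field; lra.
have : 0 <= w / (1 - w) * ((Rabs a - (1 - w) * Rabs c) * (Rabs a - (1 - w) * Rabs c)).
  apply: Rmult_le_pos; last by apply: Rle_0_sqr.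
  apply: Rmult_le_pos; first lra. apply: Rlt_le; apply: Rinv_0_lt_compat; lra.
lra.
Qed.

Lemma sumI_div {n} (F : 'I_n -> R) c : sumI (fun i => F i / c) = sumI F / c.
Proof. rewrite /Rdiv (Rmult_comm (sumI F)) -sumI_scal; apply: sumI_ext => i; ring. Qed.

Lemma ps_le_split a K m : (forall j, 0 <= a j) -> ps a K m <= a K + ps a (S K) m.
Proof.
move=> H; case: m => [|m]; first by rewrite /=; have := H K; lra.
rewrite ps_split /=. have := H (K.+1 + m)%nat. lra.
Qed.

Lemma C_conv {n} lam L mu om (l u : vec n) f g oms x y xs :
  Hyp lam L mu om l u f g oms x y -> cluster_point x xs -> converges_to x xs.
Proof.
move=> H Hc.
have Hom0 : 0 <= om by have := h_oms _ _ _ _ _ _ _ _ _ _ _ H O; lra.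
have Hom1 := h_om _ _ _ _ _ _ _ _ _ _ _ H.
have Hmu := h_mu _ _ _ _ _ _ _ _ _ _ _ H. have HL := h_L _ _ _ _ _ _ _ _ _ _ _ H.
have Hlu := h_lu _ _ _ _ _ _ _ _ _ _ _ H.
have Hx := A_x _ _ _ _ _ _ _ _ _ _ _ H.
set Sd := fun k => sqnorm (vsub (x (S k)) (x k)).
set E := fun k => sqnorm (vsub (x (S k)) (y (S k))).
set phi := fun k => sqnorm (vsub (x k) xs).
set hh := fun k => Hfin lam f (x k) - Hfin lam f xs.
have HSd0 : forall k, 0 <= Sd k by move=> k; exact: sqnorm_nonneg.
have HE0 : forall k, 0 <= E k by move=> k; exact: sqnorm_nonneg.
have Hphi0 : forall k, 0 <= phi k by move=> k; exact: sqnorm_nonneg.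
have Hhh0 : forall k, 0 <= hh k by move=> k; have := B_Hge _ _ _ _ _ _ _ _ _ _ _ _ H Hc k; rewrite /hh; lra.
have HSdrec : forall k, Sd (S k) <= om * Sd k + E (S k) / (1 - om).
  move=> k. have [b [Hb Hby]] := A_beta _ _ _ _ _ _ _ _ _ _ _ H (S k).
  rewrite /Sd /E !sqnorm_sum.
  have -> : om * sumI (fun i => vsub (x k.+1) (x k) i * vsub (x k.+1) (x k) i) +
    sumI (fun i => vsub (x k.+2) (y k.+2) i * vsub (x k.+2) (y k.+2) i) / (1 - om) =
    sumI (fun i => vsub (x k.+2) (y k.+2) i * vsub (x k.+2) (y k.+2) i / (1 - om) +
       om * (vsub (x k.+1) (x k) i * vsub (x k.+1) (x k) i)).
    by rewrite sumI_add sumI_scal sumI_div; ring.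
  apply: sumI_le => i. rewrite /vsub.
  have -> : x k.+2 i - x k.+1 i = (x k.+2 i - y k.+2 i) + (y k.+2 i - x k.+1 i) by ring.
  apply: sq_rec; first lra.
  have [Hb1 Hb2] := Hby i.
  case: (Req_dec (x (S k) i) 0) => h.
  - rewrite Hb2 // Rminus_diag Rabs_R0. apply: Rmult_le_pos => //; exact: Rabs_pos.
  - rewrite Hb1 //=. have -> : x k.+1 i + b * (x k.+1 i - x k i) - x k.+1 i = b * (x k.+1 i - x k i) by ring.
    rewrite Rabs_mult Rabs_pos_eq; last lra.
    apply: Rmult_le_compat_r; [exact: Rabs_pos | lra].
set W := sumI (fun j => u j - l j).
have HSdM : forall k, 0 <= Sd k <= INR n * (W * W).
  move=> k; split => //. apply: sqnorm_le_bound => i. rewrite /vsub.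
  have := Hx (S k) i; have := Hx k i.
  have := sumI_term (fun j => u j - l j) i ltac:(move=> j'; have := Hlu j'; lra). rewrite -/W.
  move=> *. apply: Rabs_le; split; lra.
have HSd_to0 : forall e, 0 < e -> exists K, forall k, (K <= k)%nat -> Sd k <= e.
  apply: (rec_to0 Sd (fun k => E (S k) / (1 - om)) om (INR n * (W * W))) => //.
  - have := HSdM O; lra.
  - move=> e He. have [K HK] := B_Esmall _ _ _ _ _ _ _ _ _ _ _ _ H Hc (e * (1 - om)) ltac:(nra).
    exists K => k Hk. have := HK (S k) ltac:(apply: leq_trans Hk (leqnSn _)). rewrite -/(E (S k)).
    move=> h. apply: (Rmult_le_reg_r (1 - om)); first lra.
    have -> : E (S k) / (1 - om) * (1 - om) = E (S k) by field; lra. done.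
have [d [Hd Hthr]] := A_thr _ _ _ _ _ _ _ _ _ _ _ H.
have [K1 HK1] := HSd_to0 (d * d / 4) ltac:(nra).
have Hstep : forall k, (maxn K1 1 <= k)%nat -> supp_eq (x (S k)) (x k).
  move=> k Hk.
  have hk1 : (K1 <= k)%nat by apply: leq_trans (leq_maxl _ _) Hk.
  have hk2 : (1 <= k)%nat by apply: leq_trans (leq_maxr _ _) Hk.
  have Hn : norm (vsub (x (S k)) (x k)) < d by apply: sqnorm_lt_norm => //; have := HK1 k hk1; rewrite /Sd; nra.
  move=> i. have : Rabs (x (S k) i - x k i) <= norm (vsub (x (S k)) (x k)) := comp_le_norm _ i.
  move=> hc. case: k Hk hk1 hk2 Hn hc => [//|k] _ _ _ Hn hc.
  split => h0.
  - apply: NNPP => hn. have := Hthr k i hn. rewrite h0 Rminus_0_l Rabs_Ropp in hc. lra.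
  - apply: NNPP => hn. have := Hthr (S k) i hn. rewrite h0 Rminus_0_r in hc. lra.
have [K0 [HK0a [_ [_ HK0]]]] := B_match _ _ _ _ _ _ _ _ _ _ _ _ H Hc 1 Rlt_0_1 (maxn K1 1).
have Hsupp : forall k, (K0 <= k)%nat -> supp_eq (x k) xs.
  move=> k Hk. have -> : k = (K0 + (k - K0))%nat by lia.
  elim: (k - K0)%nat => [|m IH]; first by rewrite addn0.
  rewrite addnS => i. have := Hstep (K0 + m)%nat ltac:(apply: leq_trans HK0a (leq_addr _ _)) i.
  have := IH i. tauto.
(* (v) Fejer *)
have HxsX := B_inX _ _ _ _ _ _ _ _ _ _ _ _ H Hc.
set th := fun j => Rmax 0 (phi (S j) - phi j).
have Hth0 : forall j, 0 <= th j by move=> j; apply: Rmax_l.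
have Hthrec : forall j, (K0 <= j)%nat -> th (S j) <= om * th j + 2 * Sd j.
  move=> j Hj.
  have HsSj := Hsupp (S j) ltac:(apply: leq_trans Hj (leqnSn _)).
  have HsSSj := Hsupp (S (S j)) ltac:(apply: leq_trans Hj (leq_trans (leqnSn _) (leqnSn _))).
  have Hsj := Hsupp j Hj.
  have Hy := A_y _ _ _ _ _ _ _ _ _ _ _ H (S j).
  have Hm := A_min _ _ _ _ _ _ _ _ _ _ _ H (S j).
  have Hkey := key_ineq lam L mu l u f g (y (S (S j))) (x (S (S j))) xs (h_lam _ _ _ _ _ _ _ _ _ _ _ H) HL Hmu
   (h_cvx _ _ _ _ _ _ _ _ _ _ _ H) (h_grad _ _ _ _ _ _ _ _ _ _ _ H) (h_Lip _ _ _ _ _ _ _ _ _ _ _ H)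
   Hy Hm HxsX ltac:(move=> i hi; exact: (HsSSj i).1 hi).
  have Hface := B_face _ _ _ _ _ _ _ _ _ _ _ _ H Hc (x (S (S j))) (Hx _)
    ltac:(move=> i hi; exact: (HsSSj i).2 hi).
  have Hsym : sqnorm (vsub xs (x (S (S j)))) = phi (S (S j)).
    rewrite /phi !sqnorm_sum; apply: sumI_ext => i; rewrite /vsub; ring.
  rewrite Hsym in Hkey. have hnn := sqnorm_nonneg (vsub (x (S (S j))) (y (S (S j)))).
  have H1 : phi (S (S j)) <= sqnorm (vsub xs (y (S (S j)))).
    have h0 : 0 <= mu / 2 * sqnorm (vsub (x (S (S j))) (y (S (S j)))) by apply: Rmult_le_pos; lra.
    apply: (Rmult_le_reg_l ((L + mu) / 2)); lra.
  have [b [Hb Hby]] := A_beta _ _ _ _ _ _ _ _ _ _ _ H (S j).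
  have Hyi : forall i, y (S (S j)) i = x (S j) i + b * (x (S j) i - x j i).
    move=> i. have [h1 h2] := Hby i. case: (Req_dec (x (S j) i) 0) => h.
    + rewrite h2 //. have : x j i = 0 by apply/(Hsj i)/(HsSj i).
      move=> ->; rewrite h; ring.
    + exact: h1.
  have H2 : sqnorm (vsub xs (y (S (S j)))) = (1 + b) * phi (S j) - b * phi j + b * (1 + b) * Sd j.
    rewrite /phi /Sd !sqnorm_sum -!sumI_scal -sumI_sub -sumI_add.
    apply: sumI_ext => i; rewrite /vsub Hyi; ring.
  change (th (S j)) with (Rmax 0 (phi (S (S j)) - phi (S j))). apply: Rmax_lub.
  + have := Hth0 j; have := HSd0 j; nra.
  + have h3 : b * (phi (S j) - phi j) <= om * th j.
      have : phi (S j) - phi j <= th j by apply: Rmax_r.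
      have := Hth0 j. nra.
    have h4 : b * (1 + b) * Sd j <= 2 * Sd j.
      apply: Rmult_le_compat_r; [exact: HSd0 | nra].
    lra.
set c := 1 / (1 - om).
have Hc1 : 1 <= c by rewrite /c; apply: (Rmult_le_reg_r (1 - om)); [lra| field_simplify; lra].
set A1 := 1 + c * (1 + 2 * c / mu).
set A2 := 5 + c * (4 + 2 * A1).
have Hcm : 0 < 2 * c / mu by apply: Rdiv_lt_0_compat; lra.
have HA1 : 0 < A1 by rewrite /A1; nra.
have HA2 : 0 < A2 by rewrite /A2; nra.
move=> eta Heta.
set eps := eta * eta / (2 * A2).
have Heps : 0 < eps by apply: Rdiv_lt_0_compat; nra.
have [K2 HK2] := HSd_to0 eps Heps.
have [K3 HK3] := B_Hle _ _ _ _ _ _ _ _ _ _ _ _ H Hc eps Heps.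
have [K [HK [_ [HKn _]]]] := B_match _ _ _ _ _ _ _ _ _ _ _ _ H Hc (Rmin 1 eps)
   ltac:(apply: Rmin_pos; lra) (maxn K0 (maxn K2 K3)).
have HKK0 : (K0 <= K)%nat by apply: leq_trans (leq_maxl _ _) HK.
have HKK2 : (K2 <= K)%nat by apply: leq_trans (leq_trans (leq_maxl _ _) (leq_maxr _ _)) HK.
have HKK3 : (K3 <= K)%nat by apply: leq_trans (leq_trans (leq_maxr _ _) (leq_maxr _ _)) HK.
have HphiK : phi K <= eps.
  have := norm_lt_sqnorm _ _ HKn. rewrite -/(phi K).
  have := Rmin_l 1 eps; have := Rmin_r 1 eps; have := Rmin_pos 1 eps Rlt_0_1 Heps. nra.
have HSdK : Sd K <= eps by exact: HK2.
have HhK : hh (S K) <= eps by rewrite /hh; have := HK3 (S K) ltac:(apply: leq_trans HKK3 (leqnSn _)); lra.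
have HthK : th K <= 4 * eps.
  change (th K) with (Rmax 0 (phi (S K) - phi K)). apply: Rmax_lub; first lra.
  have : phi (S K) <= 2 * phi K + 2 * Sd K.
    rewrite /phi /Sd !sqnorm_sum -!sumI_scal -sumI_add. apply: sumI_le => i; rewrite /vsub.
    have := Rle_0_sqr (2 * x K i - xs i - x (S K) i). rewrite /Rsqr. nra.
  have := Hphi0 K. lra.
have HpsE : forall m, ps (fun j => E (S j)) K m <= 2 / mu * eps.
  move=> m.
  have : ps (fun j => E (S j)) K m <= ps (fun j => 2 / mu * (hh (S j) - hh (S (S j)))) K m.
    apply: ps_le => j. have := B_E _ _ _ _ _ _ _ _ _ _ _ _ H Hc (S j). rewrite /hh -/(E (S j)).
    have -> : Hfin lam f (x (S j)) - Hfin lam f xs - (Hfin lam f (x (S (S j))) - Hfin lam f xs) =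
       Hfin lam f (x (S j)) - Hfin lam f (x (S (S j))) by ring. done.
  rewrite ps_scal (ps_tele_eq (fun j => hh (S j))).
  have := Hhh0 (S (K + m)). have : 0 < 2 / mu by apply: Rdiv_lt_0_compat; lra. nra.
have HpsSd : forall m, ps Sd K m <= A1 * eps.
  move=> m. have := ps_le_split Sd K m HSd0.
  have := rec_sum Sd (fun j => E (S j) / (1 - om)) om K Hom0 (fun j _ => HSdrec j) m.
  have -> : ps (fun j => E (S j) / (1 - om)) K m = c * ps (fun j => E (S j)) K m.
    rewrite -ps_scal /c. elim: m => [|m IH] /=; [done | rewrite IH; field; lra].
  have := HpsE m. have := HSd0 (K + m)%nat. have := ps_nonneg Sd (S K) m HSd0.
  move=> h1 h2 h3 h4 h5.
  have h6 : ps Sd (S K) m <= c * (om * Sd K + c * ps (fun j => E (S j)) K m).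
    have -> : ps Sd (S K) m = c * ((1 - om) * ps Sd (S K) m) by rewrite /c; field; lra.
    apply: Rmult_le_compat_l; first lra. nra.
  have h7 : om * Sd K + c * ps (fun j => E (S j)) K m <= eps * (1 + 2 * c / mu).
    have : om * Sd K <= eps by nra.
    have : c * ps (fun j => E (S j)) K m <= c * (2 / mu * eps) by apply: Rmult_le_compat_l; lra.
    have -> : eps * (1 + 2 * c / mu) = eps + c * (2 / mu * eps) by field; lra. lra.
  have h8 : c * (om * Sd K + c * ps (fun j => E (S j)) K m) <= c * (eps * (1 + 2 * c / mu)).
    by apply: Rmult_le_compat_l; lra.
  rewrite /A1. nra.
have HpsTh : forall m, ps th K m <= (A2 - 1) * eps.
  move=> m. have := ps_le_split th K m Hth0.
  have := rec_sum th (fun j => 2 * Sd j) om K Hom0 (fun j hj => Hthrec j (leq_trans HKK0 hj)) m.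
  rewrite ps_scal. have := HpsSd m. have := Hth0 (K + m)%nat. have := ps_nonneg th (S K) m Hth0.
  move=> h1 h2 h3 h4 h5.
  have h6 : ps th (S K) m <= c * (om * th K + 2 * ps Sd K m).
    have -> : ps th (S K) m = c * ((1 - om) * ps th (S K) m) by rewrite /c; field; lra.
    apply: Rmult_le_compat_l; first lra. nra.
  have h7 : om * th K + 2 * ps Sd K m <= eps * (4 + 2 * A1).
    have := Hth0 K. nra.
  have h8 : c * (om * th K + 2 * ps Sd K m) <= c * (eps * (4 + 2 * A1)) by apply: Rmult_le_compat_l; lra.
  rewrite /A2. nra.
exists K => k Hk.
have -> : k = (K + (k - K))%nat by move/leP: Hk => Hk; lia.
have := ps_tele phi th K (k - K) ltac:(move=> j _; rewrite /th; have := Rmax_r 0 (phi (S j) - phi j); lra).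
have := HpsTh (k - K)%nat. move=> h1 h2.
apply: sqnorm_lt_norm => //. rewrite -/(phi (K + (k - K))%nat).
have : A2 * eps < eta * eta.
  rewrite /eps. have -> : A2 * (eta * eta / (2 * A2)) = eta * eta / 2 by field; lra. nra.
nra.
Qed.
Theorem theorem2p6 (n : nat) (lam L mu om : R) (l u : vec n)
    (f : vec n -> R) (gradf : vec n -> vec n)
    (oms : nat -> R) (x y : nat -> vec n) :
  0 < lam ->
  (forall i, l i <= u i) ->
  convex f ->
  is_gradient f gradf ->
  (exists m, forall z, inX l u z -> m <= f z) ->
  0 < L ->
  (forall z w, inX l u z -> inX l u w ->
     norm (vsub (gradf z) (gradf w)) <= L * norm (vsub z w)) ->
  0 < mu ->
  (forall k, 0 <= oms k <= om) ->
  om < 1 ->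
  algorithm1 lam L mu l u gradf oms x y ->
  (* (1) *) bounded_seq x /\
  (* (2) *) (forall xs, cluster_point x xs -> local_min lam f l u xs) /\
  (* (3) *) (forall xs, cluster_point x xs ->
               Un_cv (fun k => Hfin lam f (x k)) (Hfin lam f xs)) /\
  (* (4) *) (0 < om -> (forall k, oms k = om) ->
               exists xs, converges_to x xs /\ local_min lam f l u xs).
Proof.
move=> h1 h2 h3 h4 h5 h6 h7 h8 h9 h10 h11.
have H := mkHyp n lam L mu om l u f gradf oms x y h1 h2 h3 h4 h5 h6 h7 h8 h9 h10 h11.
have Hx := A_x _ _ _ _ _ _ _ _ _ _ _ H.
split; [|split; [|split]].
- set Mb := sumI (fun i => Rabs (l i) + Rabs (u i)).
  exists (sqrt (INR n) * Mb) => k. apply: norm_le_bound.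
  + apply: sumI_nonneg => i; have := Rabs_pos (l i); have := Rabs_pos (u i); lra.
  + move=> i. apply: Rle_trans (sumI_term (fun i => Rabs (l i) + Rabs (u i)) i _).
    * have := Hx k i => -[? ?]. rewrite /Rabs; repeat case: Rcase_abs; lra.
    * move=> j; have := Rabs_pos (l j); have := Rabs_pos (u j); lra.
- move=> xs Hc; exact: B_locmin H Hc.
- move=> xs Hc e He. have [K HK] := B_Hle _ _ _ _ _ _ _ _ _ _ _ _ H Hc (e / 2) ltac:(lra).
  exists K => k Hk. have := B_Hge _ _ _ _ _ _ _ _ _ _ _ _ H Hc k.
  have := HK k ltac:(by apply/leP). move=> ha hb. rewrite /Rdist Rabs_pos_eq; lra.
- move=> _ _. have [xs Hc] := cluster_exists l u x Hx.
  exists xs; split; [exact: C_conv H Hc | exact: B_locmin H Hc].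
Qed.
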